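(* Let $\mathfrak{G}\subset\mathbb{R}^3$ be the Gaussian bell-shaped surface $z=f(x,y)=\frac32e^{-(x^2+y^2)}$ with the Riemannian metric $h$ induced from $\mathbb{R}^3$, let $\bar g>0$, and let $\mathbf{G}^T=-\bar g\,\mathrm{grad}_hf=-\frac{\bar g}{q+1}\big(f_x\frac{\partial}{\partial x}+f_y\frac{\partial}{\partial y}\big)$, $q=f_x^2+f_y^2$, be the gravitational wind on $\mathfrak{G}$. Let $\tilde\eta\in[0,1]$ and let $\tilde F_{\tilde\eta}$ be the slippery-cross-slope metric on $\mathfrak{G}$, i.e. at each $(x,y)\in T\mathfrak{G}\setminus\{0\}$ the positive solution $\tilde F$ of $F(x,y-\tilde F\,\mathbf{G}^T)=\tilde F$ with $F=\frac{\alpha^2}{\alpha+\tilde\eta\bar g\beta}$, $\alpha=\sqrt{h(y,y)}$, $\beta=-\frac1{\bar g}h(y,\mathbf{G}^T)$. Then the indicatrix of $\tilde F_{\tilde\eta}$ is strongly convex on the entire surface $\mathfrak{G}$ if and only if $\bar g<\delta_2(\tilde\eta)$, where $\delta_2(\tilde\eta)=\frac{\sqrt{2e+9}}{3(1-\tilde\eta)}$ if $\tilde\eta\in[0,\frac13]$ and $\delta_2(\tilde\eta)=\frac{\sqrt{2e+9}}{6\tilde\eta}$ if $\tilde\eta\in(\frac13,1]$.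
   Context: The slippery-cross-slope metric equivalently satisfies $\tilde F\sqrt{\alpha^2+2\bar g\beta\tilde F+\|\mathbf{G}^T\|_h^2\tilde F^2}=\alpha^2+(2-\tilde\eta)\bar g\beta\tilde F+(1-\tilde\eta)\|\mathbf{G}^T\|_h^2\tilde F^2$. *)

(* Defs.v *)
From Stdlib Require Import Reals.
From Coquelicot Require Import Coquelicot.
Open Scope R_scope.

(* Points of the surface are given by their chart coordinates p = (x,y);
   tangent vectors at p are given by their components w = (u,v) in the
   coordinate basis (d/dx, d/dy). *)

Definition fG (x y : R) : R := 3 / 2 * exp (- (x ^ 2 + y ^ 2)).

Definition fx (p : R * R) : R := Derive (fun s => fG s (snd p)) (fst p).
Definition fy (p : R * R) : R := Derive (fun s => fG (fst p) s) (snd p).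

Definition qG (p : R * R) : R := fx p ^ 2 + fy p ^ 2.

(* Riemannian metric h induced from R^3 by (x,y) |-> (x,y,f(x,y)):
   h = (1+f_x^2)dx^2 + 2 f_x f_y dx dy + (1+f_y^2) dy^2 *)
Definition hmet (p w1 w2 : R * R) : R :=
  fst w1 * fst w2 + snd w1 * snd w2
  + (fx p * fst w1 + fy p * snd w1) * (fx p * fst w2 + fy p * snd w2).

Definition Gwind (gbar : R) (p : R * R) : R * R :=
  (- (gbar / (qG p + 1)) * fx p, - (gbar / (qG p + 1)) * fy p).

Definition alpha (p w : R * R) : R := sqrt (hmet p w w).
Definition beta (gbar : R) (p w : R * R) : R := - (1 / gbar) * hmet p w (Gwind gbar p).

Definition Fcs (gbar eta : R) (p w : R * R) : R :=
  alpha p w ^ 2 / (alpha p w + eta * gbar * beta gbar p w).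

Definition shiftw (gbar : R) (p w : R * R) (t : R) : R * R :=
  (fst w - t * fst (Gwind gbar p), snd w - t * snd (Gwind gbar p)).

Definition is_slippery_cross_slope (gbar eta : R) (Ft : R * R -> R * R -> R) : Prop :=
  forall p w : R * R,
    (w = (0, 0) -> Ft p w = 0) /\
    (w <> (0, 0) ->
       0 < Ft p w /\ Fcs gbar eta p (shiftw gbar p w (Ft p w)) = Ft p w /\
       (forall t, 0 < t -> Fcs gbar eta p (shiftw gbar p w t) = t -> t = Ft p w)).

(* Strong convexity of the indicatrix {w <> 0 | N w = 1} of N : T_pM -> R:
   at every point w of the indicatrix, N is differentiable with nonzero
   gradient (a,b) (so the indicatrix is a regular curve there), and the
   second fundamental form of the indicatrix is positive, i.e. the second
   derivative of N along the tangent direction (-b,a) is > 0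
   (positive curvature with respect to the inner normal). *)
Definition strongly_convex_indicatrix (N : R * R -> R) : Prop :=
  forall w : R * R, w <> (0, 0) -> N w = 1 ->
    exists a b : R, (a, b) <> (0, 0) /\
      differentiable_pt_lim (fun u v => N (u, v)) (fst w) (snd w) a b /\
      (let line := fun t => N (fst w - t * b, snd w + t * a) in
       locally 0 (fun t => ex_derive line t) /\
       exists k : R, 0 < k /\ is_derive (Derive line) 0 k).

Definition delta2 (eta : R) : R :=
  if Rle_dec eta (1 / 3)
  then sqrt (2 * exp 1 + 9) / (3 * (1 - eta))
  else sqrt (2 * exp 1 + 9) / (6 * eta).

(* Main.v *)
Require Import Defs.
From Stdlib Require Import Reals Lra Psatz Classical ClassicalEpsilon FunctionalExtensionality.
From Coquelicot Require Import Coquelicot.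
Open Scope R_scope.


Record frame := Fr { fa1 : R; fa2 : R; fg1 : R; fg2 : R; fe : R }.
Definition hh (f:frame) u1 u2 v1 v2 := u1*v1 + u2*v2 + (fa1 f*u1+fa2 f*u2)*(fa1 f*v1+fa2 f*v2).
Definition HH f u1 u2 := hh f u1 u2 u1 u2.
Definition KK f u1 u2 := hh f u1 u2 (fg1 f) (fg2 f).
Definition GG f := hh f (fg1 f) (fg2 f) (fg1 f) (fg2 f).
Definition Fn f u1 u2 := HH f u1 u2 / (sqrt (HH f u1 u2) - fe f * KK f u1 u2).
Definition good f := 0 <= fe f <= 1 /\ 4 * fe f ^2 * GG f < 1 /\ (1 - fe f)^2 * GG f < 1.

Lemma HH_ge f u1 u2 : u1^2 + u2^2 <= HH f u1 u2.
Proof. unfold HH, hh. pose proof (pow2_ge_0 (fa1 f*u1+fa2 f*u2)). simpl in *. lra. Qed.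

Lemma HH_nonneg f u1 u2 : 0 <= HH f u1 u2.
Proof. pose proof (HH_ge f u1 u2). nra. Qed.

Lemma HH_pos f u1 u2 : (u1, u2) <> (0,0) -> 0 < HH f u1 u2.
Proof.
  intros H. pose proof (HH_ge f u1 u2).
  destruct (Req_dec u1 0) as [->|h1]; destruct (Req_dec u2 0) as [->|h2];
  [ now contradict H | nra | nra | nra ].
Qed.

Lemma hh_CS f u1 u2 v1 v2 :
  (hh f u1 u2 v1 v2)^2 <= HH f u1 u2 * HH f v1 v2.
Proof.
  assert (E : HH f u1 u2 * HH f v1 v2 - (hh f u1 u2 v1 v2)^2 =
    (1 + fa1 f^2 + fa2 f^2) * (u1*v2 - u2*v1)^2) by (unfold HH, hh; ring).
  assert (0 <= (1 + fa1 f^2 + fa2 f^2) * (u1*v2 - u2*v1)^2) by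
    (apply Rmult_le_pos; [pose proof (pow2_ge_0 (fa1 f)); pose proof (pow2_ge_0 (fa2 f)); lra | apply pow2_ge_0]).
  lra.
Qed.

Lemma GG_nonneg f : 0 <= GG f.
Proof. apply HH_nonneg. Qed.

Lemma abs_lt_sq x y : 0 < y -> x * x < y * y -> Rabs x < y.
Proof. intros hy hxy. unfold Rabs; destruct (Rcase_abs x); nra. Qed.

Lemma eK_bound f u1 u2 : good f -> 0 < HH f u1 u2 ->
  Rabs (fe f * KK f u1 u2) < sqrt (HH f u1 u2) / 2.
Proof.
  intros [he [hk hw]] hp.
  assert (cs : KK f u1 u2 * KK f u1 u2 <= HH f u1 u2 * GG f).
  { pose proof (hh_CS f u1 u2 (fg1 f) (fg2 f)) as cs. unfold KK, GG. unfold HH at 2 in cs. simpl in cs. lra. }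
  pose proof (sqrt_lt_R0 _ hp) as sp.
  pose proof (sqrt_sqrt _ (Rlt_le _ _ hp)) as ss.
  apply abs_lt_sq; [lra|].
  assert (0 <= GG f) by apply GG_nonneg.
  assert (fe f * fe f * (KK f u1 u2 * KK f u1 u2) <= fe f * fe f * (HH f u1 u2 * GG f)).
  { apply Rmult_le_compat_l; nra. }
  simpl in hk. nra.
Qed.

Lemma D_pos f u1 u2 : good f -> 0 < HH f u1 u2 ->
  sqrt (HH f u1 u2) / 2 < sqrt (HH f u1 u2) - fe f * KK f u1 u2.
Proof.
  intros g hp. pose proof (eK_bound f u1 u2 g hp).
  pose proof (Rle_abs (fe f * KK f u1 u2)). lra.
Qed.

Ltac side := repeat split; try (eexists; eassumption);
  repeat (apply Rmult_integral_contrapositive_currified); try lra.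

Definition Nd f u1 u2 d1 d2 :=
  (2 * hh f u1 u2 d1 d2 * (sqrt (HH f u1 u2) - fe f * KK f u1 u2)
   - HH f u1 u2 * (hh f u1 u2 d1 d2 / sqrt (HH f u1 u2) - fe f * hh f d1 d2 (fg1 f) (fg2 f)))
  / (sqrt (HH f u1 u2) - fe f * KK f u1 u2) ^ 2.

Lemma F_path f (u1 u2 : R -> R) t0 v1 v2 : good f ->
  is_derive u1 t0 v1 -> is_derive u2 t0 v2 -> (u1 t0, u2 t0) <> (0,0) ->
  is_derive (fun t => Fn f (u1 t) (u2 t)) t0 (Nd f (u1 t0) (u2 t0) v1 v2).
Proof.
  intros g d1 d2 nz.
  pose proof (HH_pos f _ _ nz) as hp.
  pose proof (D_pos f _ _ g hp) as hd.
  pose proof (sqrt_lt_R0 _ hp) as sp.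
  unfold Fn, Nd, KK, HH, hh in *.
  auto_derive.
  - side.
  - replace (Derive (fun x => u1 x) t0) with v1 by (symmetry; now apply is_derive_unique).
    replace (Derive (fun x => u2 x) t0) with v2 by (symmetry; now apply is_derive_unique).
    field. lra.
Qed.

Definition Hd f u1 u2 v1 v2 d1 d2 :=
  let H := HH f u1 u2 in let r := sqrt H in
  let D := r - fe f * KK f u1 u2 in
  let p := hh f u1 u2 d1 d2 in let q := hh f u1 u2 v1 v2 in
  let rr := hh f v1 v2 d1 d2 in let k := hh f d1 d2 (fg1 f) (fg2 f) in
  let s := hh f v1 v2 (fg1 f) (fg2 f) in
  let Num := 2 * p * D - H * (p / r - fe f * k) in
  let D' := q / r - fe f * s in
  let Num' := 2 * rr * D + 2 * p * D' - 2 * q * (p / r - fe f * k)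
              - H * (rr / r - p * q / (r * r * r)) in
  (Num' * D - 2 * Num * D') / D ^ 3.

Lemma Nd_path f (u1 u2 : R -> R) t0 v1 v2 d1 d2 : good f ->
  is_derive u1 t0 v1 -> is_derive u2 t0 v2 -> (u1 t0, u2 t0) <> (0,0) ->
  is_derive (fun t => Nd f (u1 t) (u2 t) d1 d2) t0 (Hd f (u1 t0) (u2 t0) v1 v2 d1 d2).
Proof.
  intros g dd1 dd2 nz.
  pose proof (HH_pos f _ _ nz) as hp.
  pose proof (D_pos f _ _ g hp) as hd.
  pose proof (sqrt_lt_R0 _ hp) as sp.
  unfold Hd, Nd, KK, HH, hh in *. cbv zeta.
  auto_derive.
  - side.
  - replace (Derive (fun x => u1 x) t0) with v1 by (symmetry; now apply is_derive_unique).
    replace (Derive (fun x => u2 x) t0) with v2 by (symmetry; now apply is_derive_unique).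
    field. lra.
Qed.

Lemma Nd_lin f u1 u2 c1 c2 d1 d2 e1 e2 :
  Nd f u1 u2 (c1*d1 + c2*e1) (c1*d2 + c2*e2) =
  c1 * Nd f u1 u2 d1 d2 + c2 * Nd f u1 u2 e1 e2.
Proof. unfold Nd, KK, HH, hh. unfold Rdiv. ring. Qed.

Lemma Nd_euler f u1 u2 : good f -> (u1,u2) <> (0,0) ->
  Nd f u1 u2 u1 u2 = Fn f u1 u2.
Proof.
  intros g nz.
  pose proof (HH_pos f _ _ nz) as hp.
  pose proof (D_pos f _ _ g hp) as hd.
  pose proof (sqrt_lt_R0 _ hp) as sp.
  pose proof (sqrt_sqrt _ (Rlt_le _ _ hp)) as ss.
  unfold Nd, Fn. fold (HH f u1 u2). fold (KK f u1 u2).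
  set (r := sqrt (HH f u1 u2)) in *.
  rewrite <- ss. field. lra.
Qed.

Lemma Qbound (e g z : R) : 0 <= e <= 1 -> 0 <= g -> 2*e*g < 1 -> g*(1-e) < 1 ->
  -g <= z <= g ->
  (1 - g*(1-e))/4 <= 1 + z*(1-2*e) + z*z*(e*e-2*e) + e*g*g.
Proof.
  intros he hg hk hw hz.
  assert (h1 : 0 <= (e*e-2*e)*(z*z-g*g)).
  { assert (e*e - 2*e <= 0) by nra. assert (z*z - g*g <= 0) by nra.
    replace ((e*e-2*e)*(z*z-g*g)) with ((2*e - e*e)*(g*g-z*z)) by ring.
    apply Rmult_le_pos; lra. }
  destruct (Req_dec g 0) as [->|gn].
  - assert (z = 0) by lra. subst. lra.
  - assert (gp : 0 < g) by lra.
    set (L := fun z => 1 + z*(1-2*e) + e*e*g*g - e*g*g).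
    assert (La : L (-g) - (1 - g*(1-e))/4 >= 0).
    { replace (L (-g) - (1 - g*(1-e))/4) with ((1 - g*(1-e))*(3/4 + e*g)) by (unfold L; cbv beta; field).
      assert (0 <= e*g) by (apply Rmult_le_pos; lra).
      apply Rle_ge, Rmult_le_pos; lra. }
    assert (Lb : L g - (1 - g*(1-e))/4 >= 0).
    { replace (L g - (1 - g*(1-e))/4) with ((1-e*g)*(1-e*g+g) - (1 - g*(1-e))/4) by (unfold L; cbv beta; field).
      assert (0 <= e*g) by (apply Rmult_le_pos; lra).
      assert (0 <= g*(1-e)) by (apply Rmult_le_pos; lra).
      assert (1/4 <= (1-e*g)*(1-e*g+g)) by nra.
      lra. }
    assert (id : 2*g*(L z - (1 - g*(1-e))/4) =
      (g - z)*(L (-g) - (1 - g*(1-e))/4) + (z+g)*(L g - (1 - g*(1-e))/4))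
      by (unfold L; cbv beta; field).
    assert (0 <= (g - z)*(L (-g) - (1 - g*(1-e))/4)) by (apply Rmult_le_pos; lra).
    assert (0 <= (z+g)*(L g - (1 - g*(1-e))/4)) by (apply Rmult_le_pos; lra).
    assert (0 <= L z - (1 - g*(1-e))/4) by nra.
    unfold L in *; cbv beta in *. nra.
Qed.

Lemma sq_lt1 c G : 0 <= c -> 0 <= G -> c^2 * G < 1 -> c * sqrt G < 1.
Proof.
  intros hc hG h.
  pose proof (sqrt_pos G). pose proof (sqrt_sqrt G hG).
  assert ((c * sqrt G)*(c*sqrt G) < 1) by (simpl in h; nra).
  nra.
Qed.

Definition mrate f := (1 - sqrt (GG f) * (1 - fe f)) / 9.

Lemma mrate_pos f : good f -> 0 < mrate f.
Proof.
  intros [he [hk hw]]. unfold mrate.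
  pose proof (sq_lt1 (1 - fe f) (GG f) ltac:(lra) (GG_nonneg f) hw).
  lra.
Qed.

Lemma KK_bound f u1 u2 :
  Rabs (KK f u1 u2) <= sqrt (HH f u1 u2) * sqrt (GG f).
Proof.
  rewrite <- sqrt_mult by apply HH_nonneg.
  rewrite <- sqrt_Rsqr_abs.
  apply sqrt_le_1_alt.
  unfold Rsqr. pose proof (hh_CS f u1 u2 (fg1 f) (fg2 f)).
  unfold KK, GG. unfold HH at 2 in H. simpl in H. lra.
Qed.

Lemma one_Nd_g f u1 u2 : good f -> (u1,u2) <> (0,0) ->
  mrate f <= 1 + Nd f u1 u2 (fg1 f) (fg2 f).
Proof.
  intros g nz.
  pose proof (HH_pos f _ _ nz) as hp.
  pose proof (D_pos f _ _ g hp) as hd.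
  pose proof (eK_bound f _ _ g hp) as heK.
  pose proof (sqrt_lt_R0 _ hp) as sp.
  pose proof (sqrt_sqrt _ (Rlt_le _ _ hp)) as ss.
  pose proof (KK_bound f u1 u2) as kb.
  destruct g as [he [hk hw]].
  pose proof (GG_nonneg f) as G0.
  pose proof (sqrt_pos (GG f)) as gp.
  pose proof (sqrt_sqrt _ G0) as gs.
  pose proof (sq_lt1 (1 - fe f) (GG f) ltac:(lra) G0 hw) as w1.
  assert (k1 : 2 * fe f * sqrt (GG f) < 1).
  { pose proof (sq_lt1 (2*fe f) (GG f) ltac:(lra) G0 ltac:(simpl in hk |- *; lra)). lra. }
  unfold Nd, mrate. fold (KK f u1 u2). fold (GG f).
  set (r := sqrt (HH f u1 u2)) in *.
  set (g := sqrt (GG f)) in *.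
  set (K := KK f u1 u2) in *.
  set (e := fe f) in *.
  rewrite <- ss, <- gs.
  set (z := K / r).
  assert (Kz : K = z * r) by (unfold z; field; lra).
  assert (zb : -g <= z <= g).
  { unfold z. apply Rabs_le_between. unfold Rdiv. rewrite Rabs_mult, Rabs_inv, (Rabs_pos_eq r) by lra.
    apply (Rmult_le_reg_r r); [lra|]. field_simplify; lra. }
  pose proof (Qbound e g z ltac:(lra) gp k1 ltac:(lra) zb) as Q.
  rewrite Kz in hd, heK |- *.
  assert (Dlt : r - e * (z*r) <= 3/2 * r).
  { pose proof (Rle_abs (- (e*(z*r)))). rewrite Rabs_Ropp in H. lra. }
  assert (Dp : 0 < r - e*(z*r)) by lra.
  apply (Rmult_le_reg_r ((r - e*(z*r))^2)); [apply pow_lt; lra|].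
  lazymatch goal with |- _ <= ?X => replace X
    with (r*r*(1 + z*(1-2*e) + z*z*(e*e-2*e) + e*g*g)) by (field; lra) end.
  assert (0 <= 1 - g*(1-e)) by lra.
  assert ((1 - g * (1 - e)) / 9 * (r - e * (z * r)) ^ 2 <= (1 - g * (1 - e)) / 9 * (9/4*(r*r))).
  { apply Rmult_le_compat_l; [lra|]. simpl. nra. }
  assert (r*r*((1 - g*(1-e))/4) <= r*r*(1 + z*(1-2*e) + z*z*(e*e-2*e) + e*g*g)).
  { apply Rmult_le_compat_l; [nra|lra]. }
  assert ((1 - g*(1-e))/9*(9/4*(r*r)) = r*r*((1 - g*(1-e))/4)) by field.
  lra.
Qed.

Lemma Hd_pos f u1 u2 v1 v2 : good f -> (u1,u2) <> (0,0) -> (v1,v2) <> (0,0) ->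
  Fn f u1 u2 = 1 -> Nd f u1 u2 v1 v2 = 0 -> 0 < Hd f u1 u2 v1 v2 v1 v2.
Proof.
  intros g nz nzv hF hN.
  pose proof (HH_pos f _ _ nz) as hp.
  pose proof (HH_pos f _ _ nzv) as hv.
  pose proof (D_pos f _ _ g hp) as hd.
  pose proof (eK_bound f _ _ g hp) as heK.
  pose proof (sqrt_lt_R0 _ hp) as sp.
  pose proof (sqrt_sqrt _ (Rlt_le _ _ hp)) as ss.
  unfold Hd, Nd, Fn in *. cbv zeta.
  fold (HH f u1 u2) in *. fold (KK f u1 u2) in *. fold (HH f v1 v2) in *.
  set (r := sqrt (HH f u1 u2)) in *.
  set (D := r - fe f * KK f u1 u2) in *.
  set (p := hh f u1 u2 v1 v2) in *.
  set (V := HH f v1 v2) in *.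
  set (k := hh f v1 v2 (fg1 f) (fg2 f)) in *.
  set (H := HH f u1 u2) in *.
  assert (Dp : 0 < D) by lra.
  assert (DH : D = H) by (rewrite <- (Rmult_1_l D), <- hF; field; lra).
  assert (Num0 : 2 * p * D - H * (p / r - fe f * k) = 0).
  { apply (Rmult_eq_reg_r (/ D^2)); [|apply Rinv_neq_0_compat; apply pow_nonzero; lra].
    rewrite Rmult_0_l. exact hN. }
  rewrite Num0.
  assert (rh : 1/2 < r).
  { pose proof (Rle_abs (fe f * KK f u1 u2)). unfold D in DH. nra. }
  assert (E : 2 * V * D + 2 * p * (p / r - fe f * k) - 2 * p * (p / r - fe f * k) -
     H * (V / r - p * p / (r * r * r)) = r*V*(2*r-1) + p*p/r).
  { rewrite DH, <- ss. field. lra. }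
  rewrite E.
  apply Rdiv_lt_0_compat; [|apply pow_lt; lra].
  replace (2 * 0 * (p / r - fe f * k)) with 0 by ring. rewrite Rminus_0_r.
  apply Rmult_lt_0_compat; [|lra].
  assert (0 <= p*p/r) by (apply Rdiv_le_0_compat; nra).
  assert (0 < r*V*(2*r-1)) by (apply Rmult_lt_0_compat; [apply Rmult_lt_0_compat|]; lra).
  lra.
Qed.


Lemma is_derive_cont (f : R -> R) x l : is_derive f x l -> continuity_pt f x.
Proof.
  intros h. apply continuity_pt_filterlim. apply (ex_derive_continuous (K:=R_AbsRing) (V:=R_NormedModule)). now exists l.
Qed.

Lemma MVT_bound (f df : R -> R) a b c0 eps :
  (forall z, Rmin a b <= z <= Rmax a b -> is_derive f z (df z)) ->
  (forall z, Rmin a b <= z <= Rmax a b -> Rabs (df z - c0) <= eps) ->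
  Rabs (f b - f a - c0 * (b - a)) <= eps * Rabs (b - a).
Proof.
  intros hd hb.
  destruct (MVT_gen f a b df) as [c [hc e]].
  - intros z hz. apply hd. lra.
  - intros z hz. apply (is_derive_cont _ _ (df z)). apply hd. lra.
  - rewrite e. replace (df c * (b - a) - c0 * (b - a)) with ((df c - c0) * (b - a)) by ring.
    rewrite Rabs_mult. apply Rmult_le_compat_r; [apply Rabs_pos|]. now apply hb.
Qed.

Lemma C1_diff (f d1 d2 : R -> R -> R) x y :
  locally_2d (fun u v => is_derive (fun z => f z v) u (d1 u v) /\
                         is_derive (fun z => f u z) v (d2 u v)) x y ->
  continuity_2d_pt d1 x y -> continuity_2d_pt d2 x y ->
  differentiable_pt_lim f x y (d1 x y) (d2 x y).
Proof.
  intros [d0 hd] c1 c2 eps.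
  assert (he2 : 0 < eps / 2) by (destruct eps; simpl; lra).
  destruct (c1 (mkposreal _ he2)) as [e1 h1].
  destruct (c2 (mkposreal _ he2)) as [e2 h2].
  assert (hmin : 0 < Rmin d0 (Rmin e1 e2)).
  { destruct d0, e1, e2; simpl. repeat apply Rmin_pos; lra. }
  exists (mkposreal _ hmin). simpl. intros u v hu hv.
  pose proof (Rmin_l d0 (Rmin e1 e2)). pose proof (Rmin_r d0 (Rmin e1 e2)).
  pose proof (Rmin_l e1 e2). pose proof (Rmin_r e1 e2).
  assert (A : Rabs (f u v - f x v - d1 x y * (u - x)) <= eps/2 * Rabs (u - x)).
  { apply (MVT_bound (fun z => f z v) (fun z => d1 z v)).
    - intros z hz. apply hd; [|lra].
      apply Rle_lt_trans with (Rabs (u - x)); [|lra].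
      unfold Rmin, Rmax in hz; destruct (Rle_dec x u);
      unfold Rabs; destruct (Rcase_abs (z - x)); destruct (Rcase_abs (u - x)); lra.
    - intros z hz. apply Rlt_le. apply (h1 z v); [|lra].
      apply Rle_lt_trans with (Rabs (u - x)); [|lra].
      unfold Rmin, Rmax in hz; destruct (Rle_dec x u);
      unfold Rabs; destruct (Rcase_abs (z - x)); destruct (Rcase_abs (u - x)); lra. }
  assert (B : Rabs (f x v - f x y - d2 x y * (v - y)) <= eps/2 * Rabs (v - y)).
  { apply (MVT_bound (fun z => f x z) (fun z => d2 x z)).
    - intros z hz. apply hd; [rewrite Rminus_eq_0, Rabs_R0; destruct d0; simpl; lra|].
      apply Rle_lt_trans with (Rabs (v - y)); [|lra].
      unfold Rmin, Rmax in hz; destruct (Rle_dec y v);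
      unfold Rabs; destruct (Rcase_abs (z - y)); destruct (Rcase_abs (v - y)); lra.
    - intros z hz. apply Rlt_le. apply (h2 x z); [rewrite Rminus_eq_0, Rabs_R0; destruct e2; simpl; lra|].
      apply Rle_lt_trans with (Rabs (v - y)); [|lra].
      unfold Rmin, Rmax in hz; destruct (Rle_dec y v);
      unfold Rabs; destruct (Rcase_abs (z - y)); destruct (Rcase_abs (v - y)); lra. }
  replace (f u v - f x y - (d1 x y * (u - x) + d2 x y * (v - y))) with
    ((f u v - f x v - d1 x y * (u - x)) + (f x v - f x y - d2 x y * (v - y))) by ring.
  eapply Rle_trans; [apply Rabs_triang|].
  pose proof (Rmax_l (Rabs (u - x)) (Rabs (v - y))).
  pose proof (Rmax_r (Rabs (u - x)) (Rabs (v - y))).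
  assert (eps/2 * Rabs (u - x) <= eps/2 * Rmax (Rabs (u - x)) (Rabs (v - y)))
    by (apply Rmult_le_compat_l; lra).
  assert (eps/2 * Rabs (v - y) <= eps/2 * Rmax (Rabs (u - x)) (Rabs (v - y)))
    by (apply Rmult_le_compat_l; lra).
  lra.
Qed.

Lemma loc_R (P : R -> Prop) x : locally x P <-> exists d : posreal, forall y, Rabs (y - x) < d -> P y.
Proof.
  split; intros [d hd]; exists d; intros y hy; apply hd; [|exact hy].
  exact hy.
Qed.

Lemma IFT1 (Phi : R -> R -> R) (S : R -> R) t0 a c :
  differentiable_pt_lim Phi t0 (S t0) a c -> c <> 0 -> continuity_pt S t0 ->
  locally t0 (fun t => Phi t (S t) = 0) ->
  is_derive S t0 (- a / c).
Proof.
  intros hd hc hS hloc.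
  apply is_derive_Reals. intros eps heps.
  apply loc_R in hloc. destruct hloc as [d3 h3].
  assert (hc' : 0 < Rabs c) by (apply Rabs_pos_lt; exact hc).
  set (M := 2 * (Rabs a + Rabs c) / Rabs c).
  assert (hM : 2 <= M).
  { unfold M. apply (Rmult_le_reg_r (Rabs c)); [lra|]. field_simplify; [|lra].
    pose proof (Rabs_pos a). lra. }
  set (e1 := Rmin (Rabs c / 2) (eps * Rabs c / (2 * M))).
  assert (he1 : 0 < e1).
  { unfold e1. apply Rmin_pos; [lra|]. apply Rdiv_lt_0_compat; [nra|lra]. }
  destruct (hd (mkposreal _ he1)) as [d1 h1]. simpl in h1.
  destruct (hS d1 (cond_pos d1)) as [d2 [hd2 h2]].
  assert (hdd : 0 < Rmin d1 (Rmin d2 d3)).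
  { destruct d1, d3; simpl. repeat apply Rmin_pos; lra. }
  exists (mkposreal _ hdd). intros h hh0 hh. simpl in hh.
  pose proof (Rmin_l d1 (Rmin d2 d3)). pose proof (Rmin_r d1 (Rmin d2 d3)).
  pose proof (Rmin_l d2 d3). pose proof (Rmin_r d2 d3).
  set (ds := S (t0 + h) - S t0).
  assert (hds : Rabs ds < d1).
  { destruct (Req_dec h 0) as [->|hn]; [contradiction|].
    unfold ds. apply (h2 (t0 + h)). split.
    - split; [exact I|]. intros e. apply hh0. lra.
    - simpl. unfold R_dist. replace (t0 + h - t0) with h by ring. lra. }
  assert (E0 : Phi (t0 + h) (S (t0 + h)) = 0).
  { apply h3. change (Rabs ((t0 + h) - t0) < d3). replace (t0 + h - t0) with h by ring. lra. }
  assert (E1 : Phi t0 (S t0) = 0).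
  { apply h3. change (Rabs (t0 - t0) < d3). replace (t0 - t0) with 0 by ring. rewrite Rabs_R0. apply cond_pos. }
  assert (K := h1 (t0 + h) (S (t0 + h)) ltac:(replace (t0 + h - t0) with h by ring; lra) hds).
  fold ds in K. rewrite E0, E1 in K. replace (t0 + h - t0) with h in K by ring.
  replace (0 - 0 - (a * h + c * ds)) with (- (a*h + c*ds)) in K by ring.
  rewrite Rabs_Ropp in K.
  pose proof (Rmin_l (Rabs c / 2) (eps * Rabs c / (2 * M))) as m1.
  pose proof (Rmin_r (Rabs c / 2) (eps * Rabs c / (2 * M))) as m2.
  fold e1 in m1, m2.
  assert (hmax : Rmax (Rabs h) (Rabs ds) <= Rabs h + Rabs ds).
  { unfold Rmax; destruct (Rle_dec (Rabs h) (Rabs ds)); pose proof (Rabs_pos h); pose proof (Rabs_pos ds); lra. }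
  assert (T1 : Rabs c * Rabs ds <= Rabs a * Rabs h + e1 * (Rabs h + Rabs ds)).
  { rewrite <- Rabs_mult. replace (c * ds) with ((a*h + c*ds) - a*h) by ring.
    eapply Rle_trans; [apply Rabs_triang|]. rewrite Rabs_Ropp, Rabs_mult.
    assert (e1 * Rmax (Rabs h) (Rabs ds) <= e1 * (Rabs h + Rabs ds)) by (apply Rmult_le_compat_l; lra).
    lra. }
  assert (T2 : Rabs ds <= M * Rabs h).
  { unfold M. apply (Rmult_le_reg_l (Rabs c)); [lra|].
    replace (Rabs c * (2 * (Rabs a + Rabs c) / Rabs c * Rabs h)) with (2*(Rabs a + Rabs c) * Rabs h) by (field; lra).
    pose proof (Rabs_pos h). pose proof (Rabs_pos ds). pose proof (Rabs_pos a). nra. }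
  assert (T3 : Rmax (Rabs h) (Rabs ds) <= M * Rabs h).
  { unfold Rmax; destruct (Rle_dec (Rabs h) (Rabs ds)); [lra|]. pose proof (Rabs_pos h). nra. }
  assert (hpos : 0 < Rabs h) by (apply Rabs_pos_lt; exact hh0).
  replace (ds / h - - a / c) with ((a*h + c*ds) / (c * h)) by (field; auto).
  unfold Rdiv. rewrite Rabs_mult, Rabs_inv, Rabs_mult.
  apply (Rmult_lt_reg_r (Rabs c * Rabs h)); [nra|].
  rewrite Rmult_assoc, Rinv_l by nra. rewrite Rmult_1_r.
  assert (e1 * Rmax (Rabs h) (Rabs ds) <= e1 * (M * Rabs h)) by (apply Rmult_le_compat_l; lra).
  assert (e1 * (M * Rabs h) <= eps * Rabs c / (2 * M) * (M * Rabs h)) by (apply Rmult_le_compat_r; nra).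
  replace (eps * Rabs c / (2 * M) * (M * Rabs h)) with (eps * (Rabs c * Rabs h) / 2) in H4 by (field; lra).
  assert (0 < eps * (Rabs c * Rabs h)) by (apply Rmult_lt_0_compat; [lra|nra]). lra.
Qed.

Lemma cont2_comp (f A B : R -> R -> R) x y :
  continuity_2d_pt f (A x y) (B x y) -> continuity_2d_pt A x y -> continuity_2d_pt B x y ->
  continuity_2d_pt (fun u v => f (A u v) (B u v)) x y.
Proof.
  intros hf hA hB eps.
  destruct (hf eps) as [d hd].
  destruct (hA d) as [dA hdA]. destruct (hB d) as [dB hdB].
  assert (hm : 0 < Rmin dA dB) by (destruct dA, dB; simpl; apply Rmin_pos; lra).
  exists (mkposreal _ hm). intros u v hu hv. simpl in hu, hv.
  pose proof (Rmin_l dA dB). pose proof (Rmin_r dA dB).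
  apply hd; [apply hdA | apply hdB]; lra.
Qed.

Lemma cont2_to_1 (f : R -> R -> R) (a b : R -> R) t0 :
  continuity_2d_pt f (a t0) (b t0) -> continuity_pt a t0 -> continuity_pt b t0 ->
  continuity_pt (fun t => f (a t) (b t)) t0.
Proof.
  intros hf ha hb eps heps.
  destruct (hf (mkposreal _ heps)) as [d hd].
  destruct (ha d (cond_pos d)) as [da [hda ha']].
  destruct (hb d (cond_pos d)) as [db [hdb hb']].
  exists (Rmin da db). split; [apply Rmin_pos; lra|].
  intros x [_ hx]. simpl in hx |- *. unfold R_dist in *.
  pose proof (Rmin_l da db). pose proof (Rmin_r da db).
  apply hd.
  - destruct (Req_dec x t0) as [->|hn]; [rewrite Rminus_eq_0, Rabs_R0; apply cond_pos|].
    apply (ha' x). split; [split; [exact I|auto]|]. simpl. unfold R_dist. lra.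
  - destruct (Req_dec x t0) as [->|hn]; [rewrite Rminus_eq_0, Rabs_R0; apply cond_pos|].
    apply (hb' x). split; [split; [exact I|auto]|]. simpl. unfold R_dist. lra.
Qed.

Lemma cont2_1d_sqrt (g : R -> R -> R) x y :
  continuity_2d_pt g x y -> 0 <= g x y -> continuity_2d_pt (fun u v => sqrt (g u v)) x y.
Proof. intros h p. apply continuity_1d_2d_pt_comp; [now apply continuity_pt_sqrt|exact h]. Qed.

Lemma cont2_div (f g : R -> R -> R) x y :
  continuity_2d_pt f x y -> continuity_2d_pt g x y -> g x y <> 0 ->
  continuity_2d_pt (fun u v => f u v / g u v) x y.
Proof. intros. unfold Rdiv. apply continuity_2d_pt_mult; auto. now apply continuity_2d_pt_inv. Qed.

Lemma cont2_pow (f : R -> R -> R) n x y :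
  continuity_2d_pt f x y -> continuity_2d_pt (fun u v => f u v ^ n) x y.
Proof.
  intros h. induction n.
  - simpl. apply continuity_2d_pt_const.
  - simpl. now apply continuity_2d_pt_mult.
Qed.

Ltac cont2 :=
  repeat match goal with
  | |- continuity_2d_pt (fun u v => _ + _) _ _ => apply continuity_2d_pt_plus
  | |- continuity_2d_pt (fun u v => _ - _) _ _ => apply continuity_2d_pt_minus
  | |- continuity_2d_pt (fun u v => _ * _) _ _ => apply continuity_2d_pt_mult
  | |- continuity_2d_pt (fun u v => - _) _ _ => apply continuity_2d_pt_opp
  | |- continuity_2d_pt (fun u v => _ / _) _ _ => apply cont2_div
  | |- continuity_2d_pt (fun u v => _ ^ _) _ _ => apply cont2_pow
  | |- continuity_2d_pt (fun u v => sqrt _) _ _ => apply cont2_1d_sqrt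
  | |- continuity_2d_pt (fun u v => u) _ _ => apply continuity_2d_pt_id1
  | |- continuity_2d_pt (fun u v => v) _ _ => apply continuity_2d_pt_id2
  | |- continuity_2d_pt (fun u v => _) _ _ => apply continuity_2d_pt_const
  end.


Lemma Fn_zero f : Fn f 0 0 = 0.
Proof. unfold Fn, HH, hh. unfold Rdiv. ring_simplify. ring. Qed.

Lemma Fn_bound f u1 u2 : good f -> Rabs (Fn f u1 u2) <= 2 * sqrt (HH f u1 u2).
Proof.
  intros g.
  destruct (classic ((u1,u2) = (0,0))) as [e|nz].
  - injection e as -> ->. rewrite Fn_zero, Rabs_R0. pose proof (sqrt_pos (HH f 0 0)). lra.
  - pose proof (HH_pos f _ _ nz) as hp.
    pose proof (D_pos f _ _ g hp) as hd.
    pose proof (sqrt_lt_R0 _ hp) as sp.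
    pose proof (sqrt_sqrt _ (Rlt_le _ _ hp)) as ss.
    unfold Fn. set (r := sqrt (HH f u1 u2)) in *. set (D := r - fe f * KK f u1 u2) in *.
    rewrite <- ss. rewrite Rabs_pos_eq by (apply Rdiv_le_0_compat; nra).
    apply (Rmult_le_reg_r D); [lra|]. field_simplify; [|lra]. nra.
Qed.

Lemma HH_cont f x y : continuity_2d_pt (fun u v => HH f u v) x y.
Proof. unfold HH, hh. cont2. Qed.

Lemma Fn_cont f x y : good f -> continuity_2d_pt (fun u v => Fn f u v) x y.
Proof.
  intros g.
  destruct (classic ((x,y) = (0,0))) as [e|nz].
  - injection e as -> ->.
    intros eps.
    assert (he : 0 < eps/2) by (destruct eps; simpl; lra).
    assert (c : continuity_2d_pt (fun u v => sqrt (HH f u v)) 0 0).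
    { apply cont2_1d_sqrt; [apply HH_cont|apply HH_nonneg]. }
    destruct (c (mkposreal _ he)) as [d hd]. exists d. intros u v hu hv.
    specialize (hd u v hu hv). simpl in hd.
    rewrite Fn_zero, Rminus_0_r.
    assert (HH f 0 0 = 0) by (unfold HH, hh; ring).
    rewrite H, sqrt_0, Rminus_0_r in hd.
    rewrite Rabs_pos_eq in hd by apply sqrt_pos.
    pose proof (Fn_bound f u v g). lra.
  - pose proof (HH_pos f _ _ nz) as hp.
    pose proof (D_pos f _ _ g hp) as hd.
    pose proof (sqrt_lt_R0 _ hp) as sp.
    unfold Fn, KK, HH, hh in *. cont2; try lra.
    all: pose proof (HH_nonneg f x y) as H; unfold HH, hh in H; lra.
Qed.

Lemma Nd_cont f x y d1 d2 : good f -> (x,y) <> (0,0) ->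
  continuity_2d_pt (fun u v => Nd f u v d1 d2) x y.
Proof.
  intros g nz.
  pose proof (HH_pos f _ _ nz) as hp.
  pose proof (D_pos f _ _ g hp) as hd.
  pose proof (sqrt_lt_R0 _ hp) as sp.
  unfold Nd, KK, HH, hh in *. cont2; try lra.
  apply pow_nonzero. lra.
Qed.

Definition gt f w1 w2 s := Fn f (w1 - s * fg1 f) (w2 - s * fg2 f) - s.

Lemma mrate_le f : good f -> mrate f <= 1/9.
Proof.
  intros [he _]. unfold mrate.
  pose proof (sqrt_pos (GG f)).
  assert (0 <= sqrt (GG f) * (1 - fe f)) by (apply Rmult_le_pos; lra). lra.
Qed.

Lemma aff_cont a b t0 : continuity_pt (fun t => a - t * b) t0.
Proof.
  apply (is_derive_cont _ _ (-b)). auto_derive; auto. ring.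
Qed.

Lemma gt_cont f w1 w2 s : good f -> continuity_pt (gt f w1 w2) s.
Proof.
  intros g. unfold gt.
  apply continuity_pt_minus; [|apply continuity_pt_id].
  apply (cont2_to_1 (Fn f) (fun t => w1 - t * fg1 f) (fun t => w2 - t * fg2 f)).
  - apply Fn_cont; auto.
  - apply aff_cont.
  - apply aff_cont.
Qed.

Lemma gt_deriv f w1 w2 s : good f -> (w1 - s * fg1 f, w2 - s * fg2 f) <> (0,0) ->
  is_derive (gt f w1 w2) s (- Nd f (w1 - s * fg1 f) (w2 - s * fg2 f) (fg1 f) (fg2 f) - 1).
Proof.
  intros g nz. unfold gt.
  apply (is_derive_minus (fun t => Fn f (w1 - t * fg1 f) (w2 - t * fg2 f)) (fun t => t)).
  - replace (- Nd f (w1 - s * fg1 f) (w2 - s * fg2 f) (fg1 f) (fg2 f)) with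
      (Nd f (w1 - s * fg1 f) (w2 - s * fg2 f) ((-1) * fg1 f + 0 * 0) ((-1) * fg2 f + 0 * 0))
      by (rewrite Nd_lin; ring).
    apply (F_path f (fun t => w1 - t * fg1 f) (fun t => w2 - t * fg2 f)); auto.
    + auto_derive; auto. ring.
    + auto_derive; auto. ring.
  - auto_derive; auto.
Qed.

Lemma df_bound f u1 u2 : good f ->
  - Nd f u1 u2 (fg1 f) (fg2 f) - 1 <= - mrate f.
Proof.
  intros g.
  destruct (classic ((u1,u2) = (0,0))) as [e|nz].
  - injection e as -> ->.
    assert (Nd f 0 0 (fg1 f) (fg2 f) = 0) by (unfold Nd, HH, KK, hh; unfold Rdiv; ring).
    pose proof (mrate_le f g). lra.
  - pose proof (one_Nd_g f u1 u2 g nz). lra.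
Qed.

Lemma decr_seg f w1 w2 s1 s2 : good f -> s1 <= s2 ->
  (forall s, s1 < s < s2 -> (w1 - s * fg1 f, w2 - s * fg2 f) <> (0,0)) ->
  gt f w1 w2 s2 - gt f w1 w2 s1 <= - mrate f * (s2 - s1).
Proof.
  intros g hs hnz.
  destruct (MVT_gen (gt f w1 w2) s1 s2
    (fun s => - Nd f (w1 - s * fg1 f) (w2 - s * fg2 f) (fg1 f) (fg2 f) - 1)) as [c [hc e]].
  - intros x hx. rewrite Rmin_left, Rmax_right in hx by lra. apply gt_deriv; auto.
  - intros x _. apply gt_cont; auto.
  - rewrite e. apply Rmult_le_compat_r; [lra|]. apply df_bound; auto.
Qed.

Lemma decr f w1 w2 s1 s2 : good f -> (w1,w2) <> (0,0) -> s1 <= s2 ->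
  gt f w1 w2 s2 - gt f w1 w2 s1 <= - mrate f * (s2 - s1).
Proof.
  intros g nz hs.
  destruct (classic (exists s0, s1 < s0 < s2 /\ (w1 - s0 * fg1 f, w2 - s0 * fg2 f) = (0,0)))
    as [[s0 [h0 e0]]|no].
  - injection e0 as e1 e2.
    assert (uniq : forall s, s <> s0 -> (w1 - s * fg1 f, w2 - s * fg2 f) <> (0,0)).
    { intros s hs0 e. injection e as e3 e4. apply nz.
      assert (fg1 f = 0).
      { apply (Rmult_eq_reg_l (s - s0)); [|lra]. lra. }
      assert (fg2 f = 0).
      { apply (Rmult_eq_reg_l (s - s0)); [|lra]. lra. }
      f_equal; nra. }
    pose proof (decr_seg f w1 w2 s1 s0 g ltac:(lra) ltac:(intros s hs'; apply uniq; lra)).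
    pose proof (decr_seg f w1 w2 s0 s2 g ltac:(lra) ltac:(intros s hs'; apply uniq; lra)).
    lra.
  - apply decr_seg; auto. intros s hs' e. apply no. exists s. auto.
Qed.

Lemma Fn_pos f w1 w2 : good f -> (w1,w2) <> (0,0) -> 0 < Fn f w1 w2.
Proof.
  intros g nz.
  pose proof (HH_pos f _ _ nz) as hp.
  pose proof (D_pos f _ _ g hp) as hd.
  pose proof (sqrt_lt_R0 _ hp) as sp.
  unfold Fn. apply Rdiv_lt_0_compat; lra.
Qed.

Lemma gt0 f w1 w2 : gt f w1 w2 0 = Fn f w1 w2.
Proof. unfold gt. repeat rewrite Rmult_0_l. repeat rewrite Rminus_0_r. reflexivity. Qed.

Lemma root_ex f w1 w2 : good f -> (w1,w2) <> (0,0) ->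
  exists s, 0 < s /\ gt f w1 w2 s = 0.
Proof.
  intros g nz.
  pose proof (Fn_pos f w1 w2 g nz) as F0. rewrite <- gt0 in F0.
  pose proof (mrate_pos f g) as hm.
  set (S := gt f w1 w2 0 / mrate f + 1).
  assert (hS : 0 < S) by (unfold S; apply Rplus_lt_0_compat; [apply Rdiv_lt_0_compat|]; lra).
  pose proof (decr f w1 w2 0 S g nz ltac:(lra)) as D.
  assert (GS : gt f w1 w2 S < 0).
  { replace (- mrate f * (S - 0)) with (- gt f w1 w2 0 - mrate f) in D by (unfold S; field; lra). lra. }
  destruct (IVT_gen (gt f w1 w2) 0 S 0) as [x [hx ex]].
  - intros x. apply gt_cont; auto.
  - rewrite Rmin_right, Rmax_left by lra. lra.
  - exists x. rewrite Rmin_left, Rmax_right in hx by lra. split; auto.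
    destruct (Req_dec x 0) as [->|]; [lra|lra].
Qed.

Lemma root_uniq f w1 w2 s1 s2 : good f -> (w1,w2) <> (0,0) ->
  gt f w1 w2 s1 = 0 -> gt f w1 w2 s2 = 0 -> s1 = s2.
Proof.
  intros g nz e1 e2. pose proof (mrate_pos f g).
  destruct (Rtotal_order s1 s2) as [h|[h|h]]; auto.
  - pose proof (decr f w1 w2 s1 s2 g nz ltac:(lra)). nra.
  - pose proof (decr f w1 w2 s2 s1 g nz ltac:(lra)). nra.
Qed.

Lemma gt_sign f w1 w2 s0 s : good f -> (w1,w2) <> (0,0) -> gt f w1 w2 s0 = 0 ->
  (s < s0 -> 0 < gt f w1 w2 s) /\ (s0 < s -> gt f w1 w2 s < 0).
Proof.
  intros g nz e. pose proof (mrate_pos f g). split; intros h.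
  - pose proof (decr f w1 w2 s s0 g nz ltac:(lra)). nra.
  - pose proof (decr f w1 w2 s0 s g nz ltac:(lra)). nra.
Qed.

From Stdlib Require Import ClassicalEpsilon.

Definition Rt f w1 w2 := epsilon (inhabits 0) (fun s =>
  ((w1,w2) = (0,0) /\ s = 0) \/ ((w1,w2) <> (0,0) /\ 0 < s /\ gt f w1 w2 s = 0)).

Lemma Rt_spec f w1 w2 : good f -> (w1,w2) <> (0,0) ->
  0 < Rt f w1 w2 /\ gt f w1 w2 (Rt f w1 w2) = 0.
Proof.
  intros g nz. unfold Rt.
  destruct (epsilon_spec (inhabits 0) (fun s =>
    ((w1,w2) = (0,0) /\ s = 0) \/ ((w1,w2) <> (0,0) /\ 0 < s /\ gt f w1 w2 s = 0))) as [[h _]|[_ h]].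
  - destruct (root_ex f w1 w2 g nz) as [s hs]. exists s. right. auto.
  - contradiction.
  - exact h.
Qed.

Lemma Rt_zero f : Rt f 0 0 = 0.
Proof.
  unfold Rt.
  destruct (epsilon_spec (inhabits 0) (fun s =>
    ((0,0) = (0,0) /\ s = 0) \/ (((0:R),(0:R)) <> (0,0) /\ 0 < s /\ gt f 0 0 s = 0))) as [[_ h]|[h _]].
  - exists 0. left. auto.
  - exact h.
  - now contradict h.
Qed.

Lemma Rt_unique f w1 w2 s : good f -> (w1,w2) <> (0,0) -> gt f w1 w2 s = 0 -> s = Rt f w1 w2.
Proof.
  intros g nz e. destruct (Rt_spec f w1 w2 g nz) as [_ e'].
  eapply root_uniq; eauto.
Qed.

Lemma gt_cont2 f s x y : good f -> continuity_2d_pt (fun a b => gt f a b s) x y.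
Proof.
  intros g. unfold gt. apply continuity_2d_pt_minus; [|apply continuity_2d_pt_const].
  apply (cont2_comp (Fn f) (fun a b => a - s * fg1 f) (fun a b => b - s * fg2 f)).
  - apply Fn_cont; auto.
  - cont2.
  - cont2.
Qed.

Lemma nz_near w1 w2 : (w1,w2) <> (0,0) -> exists d : posreal,
  forall a b, Rabs (a - w1) < d -> Rabs (b - w2) < d -> (a,b) <> (0,0).
Proof.
  intros nz.
  destruct (Req_dec w1 0) as [e1|n1].
  - assert (n2 : w2 <> 0) by (intro e2; apply nz; subst; auto).
    assert (h : 0 < Rabs w2) by (apply Rabs_pos_lt; auto).
    exists (mkposreal _ h). simpl. intros a b _ hb e. injection e as -> ->.
    rewrite Rminus_0_l, Rabs_Ropp in hb. lra.
  - assert (h : 0 < Rabs w1) by (apply Rabs_pos_lt; auto).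
    exists (mkposreal _ h). simpl. intros a b ha _ e. injection e as -> ->.
    rewrite Rminus_0_l, Rabs_Ropp in ha. lra.
Qed.

Lemma Rt_cont f w1 w2 : good f -> (w1,w2) <> (0,0) ->
  continuity_2d_pt (fun a b => Rt f a b) w1 w2.
Proof.
  intros g nz eps.
  destruct (Rt_spec f w1 w2 g nz) as [sp0 e0].
  set (s0 := Rt f w1 w2) in *.
  set (ep := Rmin (eps/2) (s0/2)).
  assert (hep : 0 < ep) by (unfold ep; apply Rmin_pos; destruct eps; simpl; lra).
  pose proof (Rmin_l (eps/2) (s0/2)). pose proof (Rmin_r (eps/2) (s0/2)). fold ep in H, H0.
  destruct (gt_sign f w1 w2 s0 (s0 - ep) g nz e0) as [A _].
  destruct (gt_sign f w1 w2 s0 (s0 + ep) g nz e0) as [_ B].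
  specialize (A ltac:(lra)). specialize (B ltac:(lra)).
  destruct (gt_cont2 f (s0 - ep) w1 w2 g (mkposreal _ A)) as [d1 h1].
  destruct (gt_cont2 f (s0 + ep) w1 w2 g (mkposreal (- gt f w1 w2 (s0 + ep)) ltac:(lra))) as [d2 h2].
  destruct (nz_near w1 w2 nz) as [d3 h3].
  assert (hd : 0 < Rmin d1 (Rmin d2 d3)) by (destruct d1, d2, d3; simpl; repeat apply Rmin_pos; lra).
  exists (mkposreal _ hd). intros a b ha hb. simpl in ha, hb.
  pose proof (Rmin_l d1 (Rmin d2 d3)). pose proof (Rmin_r d1 (Rmin d2 d3)).
  pose proof (Rmin_l d2 d3). pose proof (Rmin_r d2 d3).
  specialize (h1 a b ltac:(lra) ltac:(lra)). specialize (h2 a b ltac:(lra) ltac:(lra)).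
  specialize (h3 a b ltac:(lra) ltac:(lra)). simpl in h1, h2.
  assert (P1 : 0 < gt f a b (s0 - ep)).
  { pose proof (Rle_abs (- (gt f a b (s0 - ep) - gt f w1 w2 (s0 - ep)))) as H5.
    rewrite Rabs_Ropp in H5. lra. }
  assert (P2 : gt f a b (s0 + ep) < 0).
  { pose proof (Rle_abs (gt f a b (s0 + ep) - gt f w1 w2 (s0 + ep))). lra. }
  destruct (IVT_gen (gt f a b) (s0 - ep) (s0 + ep) 0) as [x [hx ex]].
  - intros x. apply gt_cont; auto.
  - rewrite Rmin_right, Rmax_left by lra. lra.
  - rewrite Rmin_left, Rmax_right in hx by lra.
    pose proof (Rt_unique f a b x g h3 ex) as ux. rewrite <- ux.
    fold s0. unfold Rabs; destruct (Rcase_abs (x - s0)); destruct eps; simpl in *; lra.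
Qed.

Lemma root_u_nz f w1 w2 s : good f -> gt f w1 w2 s = 0 -> 0 < s ->
  (w1 - s * fg1 f, w2 - s * fg2 f) <> (0,0).
Proof.
  intros g e hs h. injection h as h1 h2. unfold gt in e. rewrite h1, h2, Fn_zero in e. lra.
Qed.

Lemma Rt_dir f w1 w2 d1 d2 : good f -> (w1,w2) <> (0,0) ->
  is_derive (fun t => Rt f (w1 + t*d1) (w2 + t*d2)) 0
    (Nd f (w1 - Rt f w1 w2 * fg1 f) (w2 - Rt f w1 w2 * fg2 f) d1 d2 /
     (1 + Nd f (w1 - Rt f w1 w2 * fg1 f) (w2 - Rt f w1 w2 * fg2 f) (fg1 f) (fg2 f))).
Proof.
  intros g nz.
  destruct (Rt_spec f w1 w2 g nz) as [sp0 e0].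
  set (s0 := Rt f w1 w2) in *.
  pose proof (root_u_nz f w1 w2 s0 g e0 sp0) as unz.
  set (Phi := fun t s => gt f (w1 + t*d1) (w2 + t*d2) s).
  set (D1 := fun t s => Nd f (w1 + t*d1 - s * fg1 f) (w2 + t*d2 - s * fg2 f) d1 d2).
  set (D2 := fun t s => - Nd f (w1 + t*d1 - s * fg1 f) (w2 + t*d2 - s * fg2 f) (fg1 f) (fg2 f) - 1).
  assert (E1 : forall t s, w1 + t*d1 - s * fg1 f = (fun t s => w1 + t*d1 - s * fg1 f) t s) by reflexivity.
  assert (cu : continuity_2d_pt (fun t s => HH f (w1 + t*d1 - s * fg1 f) (w2 + t*d2 - s * fg2 f)) 0 s0).
  { apply (cont2_comp (HH f) (fun t s => w1 + t*d1 - s * fg1 f) (fun t s => w2 + t*d2 - s * fg2 f)).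
    - apply HH_cont.
    - cont2.
    - cont2. }
  assert (hp : HH f (w1 + 0*d1 - s0 * fg1 f) (w2 + 0*d2 - s0 * fg2 f) <> 0).
  { rewrite !Rmult_0_l, !Rplus_0_r. apply Rgt_not_eq, HH_pos; auto. }
  destruct (continuity_2d_pt_neq_0 _ _ _ cu hp) as [dl hl].
  assert (diff : differentiable_pt_lim Phi 0 s0 (D1 0 s0) (D2 0 s0)).
  { apply C1_diff.
    - exists dl. intros t s ht hs.
      assert (nzu : (w1 + t*d1 - s * fg1 f, w2 + t*d2 - s * fg2 f) <> (0,0)).
      { intros e. injection e as e1' e2'. apply (hl t s ht hs). rewrite e1', e2'. unfold HH, hh. ring. }
      split.
      + unfold Phi, D1, gt.
        rewrite <- (Rminus_0_r (Nd f _ _ d1 d2)).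
        apply (is_derive_minus (fun z => Fn f (w1 + z * d1 - s * fg1 f) (w2 + z * d2 - s * fg2 f)) (fun _ => s)).
        * apply (F_path f (fun z => w1 + z * d1 - s * fg1 f) (fun z => w2 + z * d2 - s * fg2 f)); auto.
          -- auto_derive; auto. ring.
          -- auto_derive; auto. ring.
        * auto_derive; auto.
      + unfold Phi, D2. apply gt_deriv; auto.
    - unfold D1. apply (cont2_comp (fun a b => Nd f a b d1 d2) (fun t s => w1 + t*d1 - s * fg1 f) (fun t s => w2 + t*d2 - s * fg2 f)).
      + apply Nd_cont; auto. rewrite !Rmult_0_l, !Rplus_0_r. auto.
      + cont2.
      + cont2.
    - unfold D2. apply continuity_2d_pt_minus; [|apply continuity_2d_pt_const].
      apply continuity_2d_pt_opp.
      apply (cont2_comp (fun a b => Nd f a b (fg1 f) (fg2 f)) (fun t s => w1 + t*d1 - s * fg1 f) (fun t s => w2 + t*d2 - s * fg2 f)).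
      + apply Nd_cont; auto. rewrite !Rmult_0_l, !Rplus_0_r. auto.
      + cont2.
      + cont2. }
  set (S := fun t => Rt f (w1 + t*d1) (w2 + t*d2)).
  assert (S0 : S 0 = s0) by (unfold S, s0; rewrite !Rmult_0_l, !Rplus_0_r; reflexivity).
  assert (hc : D2 0 s0 <> 0).
  { unfold D2. rewrite !Rmult_0_l, !Rplus_0_r. pose proof (one_Nd_g f _ _ g unz). pose proof (mrate_pos f g). lra. }
  assert (diff' : differentiable_pt_lim Phi 0 (S 0) (D1 0 s0) (D2 0 s0)) by (rewrite S0; exact diff).
  pose proof (IFT1 Phi S 0 (D1 0 s0) (D2 0 s0) diff' hc) as I.
  assert (cS : continuity_pt S 0).
  { unfold S. apply (cont2_to_1 (Rt f) (fun t => w1 + t*d1) (fun t => w2 + t*d2)).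
    - rewrite !Rmult_0_l, !Rplus_0_r. apply Rt_cont; auto.
    - apply (is_derive_cont _ _ d1). auto_derive; auto. ring.
    - apply (is_derive_cont _ _ d2). auto_derive; auto. ring. }
  specialize (I cS).
  assert (loc : locally 0 (fun t => Phi t (S t) = 0)).
  { destruct (nz_near w1 w2 nz) as [d hd].
    assert (hq : 0 < d / (Rabs d1 + Rabs d2 + 1)).
    { apply Rdiv_lt_0_compat; [apply cond_pos|]. pose proof (Rabs_pos d1). pose proof (Rabs_pos d2). lra. }
    exists (mkposreal _ hq). intros t ht. change (Rabs (t - 0) < d / (Rabs d1 + Rabs d2 + 1)) in ht.
    rewrite Rminus_0_r in ht.
    assert (nzt : (w1 + t*d1, w2 + t*d2) <> (0,0)).
    { pose proof (Rabs_pos d1). pose proof (Rabs_pos d2). pose proof (Rabs_pos t).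
      assert (Rabs t * (Rabs d1 + Rabs d2 + 1) < d).
      { apply (Rmult_lt_compat_r (Rabs d1 + Rabs d2 + 1)) in ht; [|lra].
        field_simplify in ht; lra. }
      apply hd.
      - replace (w1 + t*d1 - w1) with (t*d1) by ring. rewrite Rabs_mult. nra.
      - replace (w2 + t*d2 - w2) with (t*d2) by ring. rewrite Rabs_mult. nra. }
    unfold Phi, S. apply (Rt_spec f _ _ g nzt). }
  specialize (I loc).
  unfold S in I.
  replace (Nd f (w1 - s0 * fg1 f) (w2 - s0 * fg2 f) d1 d2 /
     (1 + Nd f (w1 - s0 * fg1 f) (w2 - s0 * fg2 f) (fg1 f) (fg2 f))) with (- D1 0 s0 / D2 0 s0).
  - exact I.
  - unfold D1, D2. rewrite !Rmult_0_l, !Rplus_0_r. field.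
    pose proof (one_Nd_g f _ _ g unz). pose proof (mrate_pos f g). lra.
Qed.

Definition Dd f a b d1 d2 :=
  Nd f (a - Rt f a b * fg1 f) (b - Rt f a b * fg2 f) d1 d2 /
  (1 + Nd f (a - Rt f a b * fg1 f) (b - Rt f a b * fg2 f) (fg1 f) (fg2 f)).

Lemma Rt_dir' f w1 w2 d1 d2 : good f -> (w1,w2) <> (0,0) ->
  is_derive (fun t => Rt f (w1 + t*d1) (w2 + t*d2)) 0 (Dd f w1 w2 d1 d2).
Proof. intros. unfold Dd. now apply Rt_dir. Qed.

Lemma Rt_p1 f a b : good f -> (a,b) <> (0,0) ->
  is_derive (fun z => Rt f z b) a (Dd f a b 1 0).
Proof.
  intros g nz.
  pose proof (Rt_dir' f a b 1 0 g nz) as h.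
  assert (h2 : is_derive (fun z => (fun t => Rt f (a + t*1) (b + t*0)) (z - a)) a (scal 1 (Dd f a b 1 0))).
  { apply (is_derive_comp (fun t => Rt f (a + t*1) (b + t*0)) (fun z => z - a)).
    - replace (a - a) with 0 by ring. exact h.
    - auto_derive; auto. }
  assert (E : scal (1:R) (Dd f a b 1 0) = Dd f a b 1 0) by exact (Rmult_1_l _).
  rewrite E in h2.
  eapply is_derive_ext; [|exact h2]. intros z. simpl. f_equal; ring.
Qed.

Lemma Rt_p2 f a b : good f -> (a,b) <> (0,0) ->
  is_derive (fun z => Rt f a z) b (Dd f a b 0 1).
Proof.
  intros g nz.
  pose proof (Rt_dir' f a b 0 1 g nz) as h.
  assert (h2 : is_derive (fun z => (fun t => Rt f (a + t*0) (b + t*1)) (z - b)) b (scal 1 (Dd f a b 0 1))).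
  { apply (is_derive_comp (fun t => Rt f (a + t*0) (b + t*1)) (fun z => z - b)).
    - replace (b - b) with 0 by ring. exact h.
    - auto_derive; auto. }
  assert (E : scal (1:R) (Dd f a b 0 1) = Dd f a b 0 1) by exact (Rmult_1_l _).
  rewrite E in h2.
  eapply is_derive_ext; [|exact h2]. intros z. simpl. f_equal; ring.
Qed.

Lemma Dd_cont f w1 w2 d1 d2 : good f -> (w1,w2) <> (0,0) ->
  continuity_2d_pt (fun a b => Dd f a b d1 d2) w1 w2.
Proof.
  intros g nz.
  destruct (Rt_spec f w1 w2 g nz) as [sp0 e0].
  pose proof (root_u_nz f w1 w2 _ g e0 sp0) as unz.
  assert (cu1 : continuity_2d_pt (fun a b => a - Rt f a b * fg1 f) w1 w2).
  { apply continuity_2d_pt_minus; [apply continuity_2d_pt_id1|].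
    apply continuity_2d_pt_mult; [apply Rt_cont; auto|apply continuity_2d_pt_const]. }
  assert (cu2 : continuity_2d_pt (fun a b => b - Rt f a b * fg2 f) w1 w2).
  { apply continuity_2d_pt_minus; [apply continuity_2d_pt_id2|].
    apply continuity_2d_pt_mult; [apply Rt_cont; auto|apply continuity_2d_pt_const]. }
  unfold Dd. apply cont2_div.
  - apply (cont2_comp (fun x y => Nd f x y d1 d2) (fun a b => a - Rt f a b * fg1 f) (fun a b => b - Rt f a b * fg2 f)); auto.
    apply Nd_cont; auto.
  - apply continuity_2d_pt_plus; [apply continuity_2d_pt_const|].
    apply (cont2_comp (fun x y => Nd f x y (fg1 f) (fg2 f)) (fun a b => a - Rt f a b * fg1 f) (fun a b => b - Rt f a b * fg2 f)); auto.
    apply Nd_cont; auto.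
  - pose proof (one_Nd_g f _ _ g unz). pose proof (mrate_pos f g). lra.
Qed.

Lemma Rt_diff f w1 w2 : good f -> (w1,w2) <> (0,0) ->
  differentiable_pt_lim (fun a b => Rt f a b) w1 w2 (Dd f w1 w2 1 0) (Dd f w1 w2 0 1).
Proof.
  intros g nz.
  apply (C1_diff (fun a b => Rt f a b) (fun a b => Dd f a b 1 0) (fun a b => Dd f a b 0 1)).
  - destruct (nz_near w1 w2 nz) as [d hd]. exists d. intros u v hu hv.
    split; [apply Rt_p1|apply Rt_p2]; auto.
  - apply Dd_cont; auto.
  - apply Dd_cont; auto.
Qed.

Lemma shift_derive (h : R -> R) t0 l :
  is_derive (fun s => h (t0 + s)) 0 l -> is_derive h t0 l.
Proof.
  intros H.
  assert (h2 : is_derive (fun z => (fun s => h (t0 + s)) (z - t0)) t0 (scal 1 l)).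
  { apply (is_derive_comp (fun s => h (t0 + s)) (fun z => z - t0)).
    - replace (t0 - t0) with 0 by ring. exact H.
    - auto_derive; auto. }
  assert (E : scal (1:R) l = l) by exact (Rmult_1_l _).
  rewrite E in h2.
  eapply is_derive_ext; [|exact h2]. intros z. simpl. f_equal; ring.
Qed.

Lemma line_deriv f x1 x2 a b t : good f -> (x1 - t*b, x2 + t*a) <> (0,0) ->
  is_derive (fun t => Rt f (x1 - t*b) (x2 + t*a)) t (Dd f (x1 - t*b) (x2 + t*a) (-b) a).
Proof.
  intros g nz. apply shift_derive.
  pose proof (Rt_dir' f (x1 - t*b) (x2 + t*a) (-b) a g nz) as h.
  eapply is_derive_ext; [|exact h]. intros s. simpl. f_equal; ring.
Qed.

Lemma small_t_nz x1 x2 a b : (x1,x2) <> (0,0) -> exists d : posreal,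
  forall t, Rabs t < d -> (x1 - t*b, x2 + t*a) <> (0,0).
Proof.
  intros nz. destruct (nz_near x1 x2 nz) as [d hd].
  assert (hq : 0 < d / (Rabs a + Rabs b + 1)).
  { apply Rdiv_lt_0_compat; [apply cond_pos|]. pose proof (Rabs_pos a). pose proof (Rabs_pos b). lra. }
  exists (mkposreal _ hq). intros t ht. simpl in ht.
  pose proof (Rabs_pos a). pose proof (Rabs_pos b). pose proof (Rabs_pos t).
  assert (Rabs t * (Rabs a + Rabs b + 1) < d).
  { apply (Rmult_lt_compat_r (Rabs a + Rabs b + 1)) in ht; [|lra].
    field_simplify in ht; lra. }
  apply hd.
  - replace (x1 - t*b - x1) with (-(t*b)) by ring. rewrite Rabs_Ropp, Rabs_mult. nra.
  - replace (x2 + t*a - x2) with (t*a) by ring. rewrite Rabs_mult. nra.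
Qed.

Lemma convex_at f x1 x2 : good f -> (x1,x2) <> (0,0) -> Rt f x1 x2 = 1 ->
  exists a b : R, (a, b) <> (0, 0) /\
    differentiable_pt_lim (fun u v => Rt f u v) x1 x2 a b /\
    (let line := fun t => Rt f (x1 - t * b) (x2 + t * a) in
     locally 0 (fun t => ex_derive line t) /\
     exists k : R, 0 < k /\ is_derive (Derive line) 0 k).
Proof.
  intros g nz h1.
  destruct (Rt_spec f x1 x2 g nz) as [sp0 e0].
  pose proof (root_u_nz f x1 x2 _ g e0 sp0) as unz.
  rewrite h1 in e0, unz.
  set (u1 := x1 - 1 * fg1 f) in *. set (u2 := x2 - 1 * fg2 f) in *.
  assert (Fu : Fn f u1 u2 = 1) by (unfold gt in e0; fold u1 u2 in e0; lra).
  pose proof (one_Nd_g f _ _ g unz) as hQ. pose proof (mrate_pos f g) as hm.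
  set (Q := 1 + Nd f u1 u2 (fg1 f) (fg2 f)) in *.
  set (N1 := Nd f u1 u2 1 0). set (N2 := Nd f u1 u2 0 1).
  assert (Ea : Dd f x1 x2 1 0 = N1 / Q) by (unfold Dd; rewrite h1; reflexivity).
  assert (Eb : Dd f x1 x2 0 1 = N2 / Q) by (unfold Dd; rewrite h1; reflexivity).
  set (a := Dd f x1 x2 1 0) in *. set (b := Dd f x1 x2 0 1) in *.
  assert (lin : forall c1 c2, Nd f u1 u2 c1 c2 = c1 * N1 + c2 * N2).
  { intros c1 c2. unfold N1, N2. rewrite <- Nd_lin. f_equal; ring. }
  assert (tang : Nd f u1 u2 (-b) a = 0).
  { rewrite lin, Ea, Eb. field. lra. }
  assert (eul : x1 * a + x2 * b = 1).
  { rewrite Ea, Eb.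
    assert (x1 * N1 + x2 * N2 = Q).
    { rewrite <- lin. unfold Q.
      replace x1 with (1 * u1 + 1 * fg1 f) at 1 by (unfold u1; ring).
      replace x2 with (1 * u2 + 1 * fg2 f) at 1 by (unfold u2; ring).
      rewrite Nd_lin, Nd_euler; auto. rewrite Fu. ring. }
    field_simplify; [|lra]. rewrite H. field. lra. }
  exists a, b. split; [|split].
  - intros e. injection e as ea eb. rewrite ea, eb in eul. lra.
  - apply Rt_diff; auto.
  - intros line.
    destruct (small_t_nz x1 x2 a b nz) as [d hd].
    assert (LD : forall t, Rabs t < d -> is_derive line t (Dd f (x1 - t*b) (x2 + t*a) (-b) a)).
    { intros t ht. apply line_deriv; auto. }
    split.
    + exists d. intros t ht. exists (Dd f (x1 - t*b) (x2 + t*a) (-b) a). apply LD.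
      change (Rabs (t - 0) < d) in ht. rewrite Rminus_0_r in ht. exact ht.
    + assert (line0 : line 0 = 1).
      { unfold line. rewrite !Rmult_0_l, Rminus_0_r, Rplus_0_r. exact h1. }
      assert (L0 : is_derive line 0 0).
      { replace 0 with (Dd f (x1 - 0*b) (x2 + 0*a) (-b) a) at 2.
        - apply LD. rewrite Rabs_R0. apply cond_pos.
        - rewrite !Rmult_0_l, Rminus_0_r, Rplus_0_r. unfold Dd. rewrite h1. fold u1 u2.
          rewrite tang. unfold Rdiv. ring. }
      set (U1 := fun t => x1 - t*b - line t * fg1 f).
      set (U2 := fun t => x2 + t*a - line t * fg2 f).
      assert (dU1 : is_derive U1 0 (-b)).
      { unfold U1. auto_derive.
        - exists 0. exact L0.
        - replace (Derive (fun x => line x) 0) with 0 by (symmetry; now apply is_derive_unique). ring. }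
      assert (dU2 : is_derive U2 0 a).
      { unfold U2. auto_derive.
        - exists 0. exact L0.
        - replace (Derive (fun x => line x) 0) with 0 by (symmetry; now apply is_derive_unique). ring. }
      assert (U10 : U1 0 = u1) by (unfold U1; rewrite line0; unfold u1; ring).
      assert (U20 : U2 0 = u2) by (unfold U2; rewrite line0; unfold u2; ring).
      assert (Unz : (U1 0, U2 0) <> (0,0)) by (rewrite U10, U20; exact unz).
      pose proof (Nd_path f U1 U2 0 (-b) a (-b) a g dU1 dU2 Unz) as dP.
      pose proof (Nd_path f U1 U2 0 (-b) a (fg1 f) (fg2 f) g dU1 dU2 Unz) as dQ.
      rewrite U10, U20 in dP, dQ.
      assert (dQ' : is_derive (fun t => 1 + Nd f (U1 t) (U2 t) (fg1 f) (fg2 f)) 0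
                      (0 + Hd f u1 u2 (-b) a (fg1 f) (fg2 f))).
      { apply (is_derive_plus (fun _ => 1)); [auto_derive; auto|exact dQ]. }
      assert (Q0 : 1 + Nd f (U1 0) (U2 0) (fg1 f) (fg2 f) <> 0).
      { rewrite U10, U20. fold Q. lra. }
      pose proof (is_derive_div _ _ 0 _ _ dP dQ' Q0) as dE.
      cbv beta in dE. rewrite U10, U20, tang in dE. fold Q in dE.
      assert (vnz : (-b, a) <> (0,0)).
      { intros e. injection e as e1 e2. assert (b = 0) by lra. rewrite H, e2 in eul. lra. }
      pose proof (Hd_pos f u1 u2 (-b) a g unz vnz Fu tang) as HP.
      exists (Hd f u1 u2 (-b) a (-b) a / Q). split.
      * apply Rdiv_lt_0_compat; lra.
      * apply (is_derive_ext_loc (fun t => Nd f (U1 t) (U2 t) (-b) a / (1 + Nd f (U1 t) (U2 t) (fg1 f) (fg2 f)))).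
        -- exists d. intros t ht. change (Rabs (t - 0) < d) in ht. rewrite Rminus_0_r in ht.
           symmetry. apply is_derive_unique. apply LD. exact ht.
        -- replace (Hd f u1 u2 (- b) a (- b) a / Q) with
             ((Hd f u1 u2 (- b) a (- b) a * Q - 0 * (0 + Hd f u1 u2 (- b) a (fg1 f) (fg2 f))) / Q ^ 2)
             by (field; lra).
           exact dE.
Qed.


Lemma fx_eq p : fx p = -3 * fst p * exp (- (fst p ^ 2 + snd p ^ 2)).
Proof.
  unfold fx, fG. apply is_derive_unique. auto_derive; auto. replace (fst p * (fst p * 1) + snd p * (snd p * 1)) with (fst p^2 + snd p^2) by ring. field.
Qed.

Lemma fy_eq p : fy p = -3 * snd p * exp (- (fst p ^ 2 + snd p ^ 2)).
Proof.
  unfold fy, fG. apply is_derive_unique. auto_derive; auto. replace (fst p * (fst p * 1) + snd p * (snd p * 1)) with (fst p^2 + snd p^2) by ring. field.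
Qed.

Definition frame_of (gbar eta : R) (p : R * R) : frame :=
  Fr (fx p) (fy p) (fst (Gwind gbar p)) (snd (Gwind gbar p)) eta.

Lemma Fcs_eq gbar eta p u : gbar <> 0 ->
  Fcs gbar eta p u = Fn (frame_of gbar eta p) (fst u) (snd u).
Proof.
  intros hg. unfold Fcs, Fn, alpha, beta, HH, KK, frame_of, hmet, hh. cbn [fa1 fa2 fg1 fg2 fe].
  destruct u as [u1 u2]. destruct (Gwind gbar p) as [G1 G2]. cbn [fst snd].
  rewrite pow2_sqrt.
  - f_equal. field. exact hg.
  - pose proof (pow2_ge_0 (fx p * u1 + fy p * u2)). pose proof (pow2_ge_0 u1). pose proof (pow2_ge_0 u2).
    simpl in *. lra.
Qed.

Lemma GG_eq gbar eta p : 0 < gbar ->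
  GG (frame_of gbar eta p) = gbar^2 * qG p / (qG p + 1).
Proof.
  intros hg. unfold GG, hh, frame_of, Gwind, qG. simpl.
  assert (0 <= fx p ^2 + fy p ^2) by (pose proof (pow2_ge_0 (fx p)); pose proof (pow2_ge_0 (fy p)); lra).
  field. lra.
Qed.

Lemma qG_eq p : qG p = 9 * (fst p ^2 + snd p ^2) * exp (- (fst p ^ 2 + snd p ^ 2)) ^ 2.
Proof. unfold qG. rewrite fx_eq, fy_eq. ring. Qed.

Lemma qG_bound p : qG p <= 9 / (2 * exp 1).
Proof.
  rewrite qG_eq. set (z := fst p ^2 + snd p ^2).
  assert (hz : 0 <= z) by (unfold z; pose proof (pow2_ge_0 (fst p)); pose proof (pow2_ge_0 (snd p)); lra).
  assert (E : exp (- z) ^ 2 * exp (2*z) = 1).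
  { simpl. rewrite Rmult_1_r, <- !exp_plus. replace (-z + -z + 2*z) with 0 by ring. apply exp_0. }
  assert (E2 : exp (2*z) = exp (2*z - 1) * exp 1).
  { rewrite <- exp_plus. f_equal. ring. }
  pose proof (exp_ineq1_le (2*z - 1)) as I.
  pose proof (exp_pos 1). pose proof (exp_pos (2*z)). pose proof (exp_pos (-z)).
  apply (Rmult_le_reg_r (2 * exp 1 * exp (2*z))); [nra|].
  replace (9 / (2 * exp 1) * (2 * exp 1 * exp (2 * z))) with (9 * exp (2*z)) by (field; lra).
  replace (9 * z * exp (- z) ^ 2 * (2 * exp 1 * exp (2 * z))) with (18 * z * exp 1 * (exp (-z)^2 * exp (2*z))) by ring.
  rewrite E. rewrite E2. nra.
Qed.

Lemma GG_bound gbar eta p : 0 < gbar ->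
  GG (frame_of gbar eta p) <= 9 * gbar^2 / (2 * exp 1 + 9).
Proof.
  intros hg. rewrite GG_eq by auto.
  pose proof (qG_bound p) as hq. pose proof (exp_pos 1) as he.
  assert (q0 : 0 <= qG p) by (unfold qG; pose proof (pow2_ge_0 (fx p)); pose proof (pow2_ge_0 (fy p)); lra).
  assert (hq' : qG p * (2 * exp 1) <= 9).
  { apply (Rmult_le_compat_r (2 * exp 1)) in hq; [|lra]. field_simplify in hq; lra. }
  apply (Rmult_le_reg_r ((qG p + 1) * (2 * exp 1 + 9))); [nra|].
  field_simplify; [|lra|lra].
  assert (0 <= gbar^2) by apply pow2_ge_0. simpl. nra.
Qed.

Lemma good_of gbar eta p : 0 < gbar -> 0 <= eta <= 1 -> gbar < delta2 eta ->
  good (frame_of gbar eta p).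
Proof.
  intros hg he hd.
  pose proof (GG_bound gbar eta p hg) as hb.
  pose proof (GG_nonneg (frame_of gbar eta p)) as G0.
  set (G := GG (frame_of gbar eta p)) in *.
  pose proof (exp_pos 1) as e1.
  set (s := sqrt (2 * exp 1 + 9)) in *.
  assert (ss : s * s = 2 * exp 1 + 9) by (apply sqrt_sqrt; lra).
  assert (sp : 0 < s) by (apply sqrt_lt_R0; lra).
  unfold good. cbn [fe frame_of]. fold G. split; [exact he|].
  unfold delta2 in hd. fold s in hd.
  destruct (Rle_dec eta (1/3)) as [h3|h3].
  - assert (hg' : 3 * gbar * (1 - eta) < s).
    { apply (Rmult_lt_compat_r (3 * (1 - eta))) in hd; [|lra]. field_simplify in hd; lra. }
    assert (A : 9 * gbar^2 * (1-eta)^2 < 2 * exp 1 + 9).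
    { rewrite <- ss. assert (0 <= 3 * gbar * (1 - eta)) by (apply Rmult_le_pos; lra). simpl. nra. }
    assert (B : (1 - eta)^2 * (9 * gbar^2 / (2 * exp 1 + 9)) < 1).
    { apply (Rmult_lt_reg_r (2 * exp 1 + 9)); [lra|]. field_simplify; lra. }
    assert (C : 4 * eta^2 * (9 * gbar^2 / (2 * exp 1 + 9)) < 1).
    { apply (Rmult_lt_reg_r (2 * exp 1 + 9)); [lra|]. field_simplify; [|lra].
      assert (4 * eta^2 <= (1-eta)^2) by nra.
      assert (0 <= 9 * gbar^2) by nra. nra. }
    split.
    + eapply Rle_lt_trans; [|exact C]. apply Rmult_le_compat_l; [nra|exact hb].
    + eapply Rle_lt_trans; [|exact B]. apply Rmult_le_compat_l; [nra|exact hb].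
  - assert (hg' : 6 * eta * gbar < s).
    { apply (Rmult_lt_compat_r (6 * eta)) in hd; [|lra]. field_simplify in hd; lra. }
    assert (A : 36 * eta^2 * gbar^2 < 2 * exp 1 + 9).
    { rewrite <- ss. assert (0 <= 6 * eta * gbar) by (apply Rmult_le_pos; lra). simpl. nra. }
    assert (C : 4 * eta^2 * (9 * gbar^2 / (2 * exp 1 + 9)) < 1).
    { apply (Rmult_lt_reg_r (2 * exp 1 + 9)); [lra|]. field_simplify; lra. }
    assert (B : (1 - eta)^2 * (9 * gbar^2 / (2 * exp 1 + 9)) < 1).
    { apply (Rmult_lt_reg_r (2 * exp 1 + 9)); [lra|]. field_simplify; [|lra].
      assert ((1-eta)^2 <= 4 * eta^2) by nra.
      assert (0 <= 9 * gbar^2) by nra. nra. }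
    split.
    + eapply Rle_lt_trans; [|exact C]. apply Rmult_le_compat_l; [nra|exact hb].
    + eapply Rle_lt_trans; [|exact B]. apply Rmult_le_compat_l; [nra|exact hb].
Qed.

Lemma pair_nz (w : R * R) : w <> (0,0) -> (fst w, snd w) <> (0,0).
Proof. destruct w; auto. Qed.

Lemma if_dir gbar eta : 0 < gbar -> 0 <= eta <= 1 -> gbar < delta2 eta ->
  exists Ft : R * R -> R * R -> R,
     is_slippery_cross_slope gbar eta Ft /\
     forall p : R * R, strongly_convex_indicatrix (Ft p).
Proof.
  intros hg he hd.
  exists (fun p w => Rt (frame_of gbar eta p) (fst w) (snd w)). split.
  - intros p w. pose proof (good_of gbar eta p hg he hd) as g.
    set (f := frame_of gbar eta p) in *. split.
    + intros ->. simpl. apply Rt_zero.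
    + intros nz. apply pair_nz in nz.
      destruct (Rt_spec f _ _ g nz) as [h1 h2]. split; [exact h1|split].
      * rewrite Fcs_eq by lra. fold f. unfold shiftw. cbn [fst snd].
        unfold gt in h2. unfold f, frame_of in h2 |- *. cbn [fg1 fg2] in h2. lra.
      * intros t ht e. rewrite Fcs_eq in e by lra. fold f in e. unfold shiftw in e. cbn [fst snd] in e.
        apply Rt_unique; auto. unfold gt. unfold f, frame_of in e |- *. cbn [fg1 fg2]. lra.
  - intros p w nz h1. pose proof (good_of gbar eta p hg he hd) as g.
    apply pair_nz in nz.
    destruct (convex_at (frame_of gbar eta p) (fst w) (snd w) g nz h1) as [a [b [h2 [h3 h4]]]].
    exists a, b. split; [exact h2|split; [exact h3|exact h4]].
Qed.

Lemma strong_wind f t : 0 <= fe f <= 1 -> 0 < GG f -> 1 <= (1 - fe f)^2 * GG f -> 0 < t ->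
  Fn f (- fg1 f - t * fg1 f) (- fg2 f - t * fg2 f) <> t.
Proof.
  intros he hG hw ht e.
  set (Gm := GG f) in *. set (g := sqrt Gm).
  assert (gs : g * g = Gm) by (apply sqrt_sqrt; lra).
  assert (gp : 0 < g) by (apply sqrt_lt_R0; lra).
  assert (EH : HH f (- fg1 f - t * fg1 f) (- fg2 f - t * fg2 f) = ((1+t)*g) * ((1+t)*g)).
  { replace (((1+t)*g) * ((1+t)*g)) with ((1+t)*(1+t)*(g*g)) by ring. rewrite gs.
    unfold HH, Gm, GG, hh. ring. }
  assert (EK : KK f (- fg1 f - t * fg1 f) (- fg2 f - t * fg2 f) = - (1+t) * (g*g)).
  { rewrite gs. unfold KK, Gm, GG, hh. ring. }
  unfold Fn in e. rewrite EH, EK, sqrt_square in e by nra.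
  replace ((1 + t) * g * ((1 + t) * g) / ((1 + t) * g - fe f * (- (1 + t) * (g * g))))
    with ((1+t)*g / (1 + fe f * g)) in e.
  2:{ assert (0 <= fe f * g) by (apply Rmult_le_pos; lra). field. split; [|lra]. replace ((1 + t) * g - fe f * (- (1 + t) * (g * g))) with ((1+t)*g*(1 + fe f * g)) by ring. apply Rgt_not_eq. apply Rmult_lt_0_compat; [apply Rmult_lt_0_compat|]; lra. }
  assert (0 <= fe f * g) by (apply Rmult_le_pos; lra).
  assert (e2 : (1+t)*g = t * (1 + fe f * g)).
  { replace ((1+t)*g) with ((1+t)*g/(1+fe f*g) * (1 + fe f*g)) at 1 by (field; lra). rewrite e. reflexivity. }
  assert (hw' : 1 <= (1 - fe f) * g).
  { assert (0 <= (1 - fe f) * g) by (apply Rmult_le_pos; lra).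
    rewrite <- gs in hw. simpl in hw. nra. }
  nra.
Qed.

Lemma exp_half : exp (- (sqrt (1/2) ^ 2 + 0 ^ 2)) ^ 2 = / exp 1.
Proof.
  rewrite pow2_sqrt by lra. replace (- (1/2 + 0^2)) with (-(1/2)) by ring. assert (H : exp (-(1/2)) * exp (-(1/2)) = / exp 1) by (rewrite <- exp_plus, <- exp_Ropp; f_equal; field). simpl. rewrite Rmult_1_r. exact H.
Qed.

Lemma onlyif_weak gbar eta Ft : 0 < gbar -> 0 <= eta <= 1 -> eta <= 1/3 ->
  sqrt (2 * exp 1 + 9) / (3 * (1 - eta)) <= gbar ->
  is_slippery_cross_slope gbar eta Ft -> False.
Proof.
  intros hg he h3 hd hs.
  set (p := (sqrt (1/2), 0)).
  set (f := frame_of gbar eta p).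
  pose proof (exp_pos 1) as e1.
  assert (hq : qG p = 9 / (2 * exp 1)).
  { rewrite qG_eq. unfold p. cbn [fst snd]. rewrite exp_half. rewrite pow2_sqrt by lra.
    replace (0^2) with 0 by ring. field. lra. }
  assert (hG : GG f = 9 * gbar^2 / (2 * exp 1 + 9)).
  { unfold f. rewrite GG_eq, hq by lra. field. lra. }
  set (s := sqrt (2 * exp 1 + 9)) in *.
  assert (ss : s * s = 2 * exp 1 + 9) by (apply sqrt_sqrt; lra).
  assert (sp : 0 < s) by (apply sqrt_lt_R0; lra).
  assert (hg' : s <= 3 * gbar * (1 - eta)).
  { apply (Rmult_le_compat_r (3 * (1 - eta))) in hd; [|lra]. field_simplify in hd; lra. }
  assert (GP : 0 < GG f) by (rewrite hG; apply Rdiv_lt_0_compat; [nra|lra]).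
  assert (W : 1 <= (1 - fe f)^2 * GG f).
  { rewrite hG. unfold f, frame_of. cbn [fe].
    apply (Rmult_le_reg_r (2 * exp 1 + 9)); [lra|]. field_simplify; [|lra]. rewrite <- ss. simpl. nra. }
  set (w := (- fg1 f, - fg2 f)).
  assert (wnz : w <> (0,0)).
  { intros e. assert (ea : - fg1 f = 0) by exact (f_equal fst e).
    assert (eb : - fg2 f = 0) by exact (f_equal snd e).
    assert (fg1 f = 0) by lra. assert (fg2 f = 0) by lra.
    unfold GG, hh in GP. rewrite H, H0 in GP. lra. }
  destruct (hs p w) as [_ H]. destruct (H wnz) as [tp [te _]].
  rewrite Fcs_eq in te by lra. fold f in te. unfold shiftw, w in te. cbn [fst snd] in te.
  apply (strong_wind f (Ft p w)); auto.
Qed.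


Lemma degen_ineq (eta T : R) : 1/3 < eta <= 1 -> T^2 <= 1/25 ->
  let d := 64 * (T^2)^2 in let S := 1 + d in let C := 1/2 - d / (2*eta) in
  C^2 + T^2 + S * C / 2 <= S * sqrt (C^2 + T^2).
Proof.
  intros he hT d S C.
  set (X := T^2) in *.
  assert (X0 : 0 <= X) by (unfold X; apply pow2_ge_0).
  assert (d0 : 0 <= d) by (unfold d; nra).
  assert (d1 : d <= 64/625) by (unfold d; nra).
  assert (e0 : d / (2*eta) <= 3/2 * d).
  { apply (Rmult_le_reg_r (2*eta)); [lra|]. field_simplify; [|lra]. nra. }
  assert (e1 : d / 2 <= d / (2*eta)).
  { apply (Rmult_le_reg_r (2*eta)); [lra|]. field_simplify; [|lra]. nra. }
  assert (C1 : 1/4 <= C) by (unfold C; lra).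
  assert (C2 : C <= 1/2) by (unfold C; assert (0 <= d/(2*eta)) by lra; lra).
  set (m := C + X/(2*C) - X^2/(8*C^3)).
  assert (mle : m <= sqrt (C^2 + T^2)).
  { fold X. destruct (Rle_dec m 0) as [hm|hm]; [pose proof (sqrt_pos (C^2 + X)); lra|].
    rewrite <- (sqrt_pow2 m) by lra. apply sqrt_le_1_alt.
    assert (E : C^2 + X - m^2 = X^3/(64*C^6) * (8*C^2 - X)) by (unfold m; field; lra).
    assert (0 <= X^3/(64*C^6) * (8*C^2 - X)).
    { apply Rmult_le_pos; [apply Rdiv_le_0_compat; [apply pow_le; lra|apply Rmult_lt_0_compat; [lra|apply pow_lt; lra]]|nra]. }
    lra. }
  assert (S0 : 1 <= S) by (unfold S; lra).
  eapply Rle_trans; [|apply Rmult_le_compat_l; [lra|exact mle]].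
  fold X.
  assert (A : X <= S * X / (2*C)).
  { apply (Rmult_le_reg_r (2*C)); [lra|]. field_simplify; [|lra]. nra. }
  assert (B : S * X^2 / (8*C^3) <= C * (d/(2*eta)) + d*C/2).
  { apply (Rmult_le_reg_r (8*C^3)); [apply Rmult_lt_0_compat; [lra|apply pow_lt; lra]|].
    field_simplify; [|lra|lra].
    assert (C4 : 1/256 <= C^4) by (replace (1/256) with ((1/4)^4) by field; apply pow_incr; lra).
    assert (8 * C^4 * d <= 8*C^3 * (C * (d/(2*eta)) + d*C/2)).
    { replace (8*C^3 * (C * (d/(2*eta)) + d*C/2)) with (8*C^4*(d/(2*eta) + d/2)) by (field; lra).
      apply Rmult_le_compat_l; [nra|lra]. }
    assert (S * X^2 <= 8 * C^4 * d).
    { assert (Y1 : 64 * X^2 <= 1) by (change (d <= 1); lra). assert (X^2 * (1/256) <= X^2 * C^4) by (apply Rmult_le_compat_l; [apply pow2_ge_0|lra]). assert (0 <= X^2) by apply pow2_ge_0. unfold S, d. assert ((1 + 64 * X^2) * X^2 <= 2 * X^2) by nra. nra. }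
    replace ((8 * C ^ 4 * d * eta + 8 * C ^ 4 * d) / (2 * eta)) with (8 * C ^ 3 * (C * (d / (2 * eta)) + d * C / 2)) by (field; lra). lra. }
  assert (Eq : C^2 + X + S*C/2 = S*C - C*(d/(2*eta)) - d*C/2 + X).
  { unfold S, C. field. lra. }
  rewrite Eq. unfold m.
  replace (S * (C + X / (2 * C) - X ^ 2 / (8 * C ^ 3))) with (S*C + S*X/(2*C) - S*X^2/(8*C^3)) by (field; lra).
  lra.
Qed.

Definition good0 f := 0 <= fe f <= 1 /\ 4 * fe f ^2 * GG f <= 1.

Lemma D_pos0 f u1 u2 : good0 f -> 0 < HH f u1 u2 ->
  sqrt (HH f u1 u2) / 2 <= sqrt (HH f u1 u2) - fe f * KK f u1 u2.
Proof.
  intros [he hk] hp.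
  assert (cs : KK f u1 u2 * KK f u1 u2 <= HH f u1 u2 * GG f).
  { pose proof (hh_CS f u1 u2 (fg1 f) (fg2 f)) as cs. unfold KK, GG. unfold HH at 2 in cs. simpl in cs. lra. }
  pose proof (sqrt_lt_R0 _ hp) as sp.
  pose proof (sqrt_sqrt _ (Rlt_le _ _ hp)) as ss.
  assert (0 <= GG f) by apply GG_nonneg.
  assert (fe f * fe f * (KK f u1 u2 * KK f u1 u2) <= fe f * fe f * (HH f u1 u2 * GG f)).
  { apply Rmult_le_compat_l; nra. }
  assert (Q : (fe f * KK f u1 u2) * (fe f * KK f u1 u2) <= (sqrt (HH f u1 u2) / 2) * (sqrt (HH f u1 u2) / 2)).
  { simpl in hk. nra. }
  assert (fe f * KK f u1 u2 <= sqrt (HH f u1 u2) / 2) by nra.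
  lra.
Qed.

Lemma Fn_cont0 f x y : good0 f -> (x,y) <> (0,0) -> continuity_2d_pt (fun u v => Fn f u v) x y.
Proof.
  intros g nz.
  pose proof (HH_pos f _ _ nz) as hp.
  pose proof (D_pos0 f _ _ g hp) as hd.
  pose proof (sqrt_lt_R0 _ hp) as sp.
  unfold Fn, KK, HH, hh in *. cont2; try lra.
  all: pose proof (HH_nonneg f x y) as H; unfold HH, hh in H; lra.
Qed.

Lemma Fn_pos0 f w1 w2 : good0 f -> (w1,w2) <> (0,0) -> 0 < Fn f w1 w2.
Proof.
  intros g nz.
  pose proof (HH_pos f _ _ nz) as hp.
  pose proof (D_pos0 f _ _ g hp) as hd.
  pose proof (sqrt_lt_R0 _ hp) as sp.
  unfold Fn. apply Rdiv_lt_0_compat; lra.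
Qed.

Lemma Fn_le0 f w1 w2 S : good0 f -> (w1,w2) <> (0,0) ->
  HH f w1 w2 <= S * (sqrt (HH f w1 w2) - fe f * KK f w1 w2) -> Fn f w1 w2 <= S.
Proof.
  intros g nz h.
  pose proof (HH_pos f _ _ nz) as hp.
  pose proof (D_pos0 f _ _ g hp) as hd.
  pose proof (sqrt_lt_R0 _ hp) as sp.
  unfold Fn. apply (Rmult_le_reg_r (sqrt (HH f w1 w2) - fe f * KK f w1 w2)); [lra|].
  field_simplify; lra.
Qed.

Lemma Fn_flip f u1 u2 : fa2 f = 0 -> fg2 f = 0 -> Fn f u1 (- u2) = Fn f u1 u2.
Proof.
  intros h1 h2. unfold Fn, HH, KK, hh. rewrite h1, h2. f_equal; [ring|]. f_equal; [f_equal; ring|ring].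
Qed.

Lemma growth (L : R -> R) k : locally 0 (fun t => ex_derive L t) -> Derive L 0 = 0 -> 0 < k ->
  is_derive (Derive L) 0 k -> exists t0, 0 < t0 /\ forall t, 0 < t < t0 -> L 0 + k * t^2 / 4 <= L t.
Proof.
  intros hloc hL0 hk hD.
  apply loc_R in hloc. destruct hloc as [rho hrho].
  apply is_derive_Reals in hD.
  destruct (hD (k/2) ltac:(lra)) as [dl hdl].
  exists (Rmin dl rho). split; [apply Rmin_pos; apply cond_pos|].
  intros t [t1 t2].
  pose proof (Rmin_l dl rho). pose proof (Rmin_r dl rho).
  assert (der : forall s, 0 <= s <= t -> is_derive (fun s => L s - k * s^2/4) s (Derive L s - k * s / 2)).
  { intros s hs. assert (ex_derive L s) by (apply hrho; change (Rabs (s - 0) < rho); rewrite Rminus_0_r, Rabs_pos_eq; lra).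
    apply (is_derive_minus L (fun s => k * s^2/4)).
    - now apply Derive_correct.
    - auto_derive; auto. field. }
  destruct (MVT_gen (fun s => L s - k * s^2/4) 0 t (fun s => Derive L s - k * s / 2)) as [c [hc e]].
  - intros s hs. rewrite Rmin_left, Rmax_right in hs by lra. apply der. lra.
  - intros s hs. rewrite Rmin_left, Rmax_right in hs by lra.
    apply (is_derive_cont _ _ _ (der s hs)).
  - rewrite Rmin_left, Rmax_right in hc by lra.
    assert (pos : 0 <= Derive L c - k * c / 2).
    { destruct (Req_dec c 0) as [->|cn].
      - rewrite hL0. lra.
      - assert (hc' : Rabs c < dl) by (rewrite Rabs_pos_eq; lra).
        specialize (hdl c cn hc'). rewrite Rplus_0_l, hL0, Rminus_0_r in hdl.
        assert (- (k/2) < Derive L c / c - k).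
        { pose proof (Rle_abs (-(Derive L c / c - k))). rewrite Rabs_Ropp in H1. lra. }
        assert (k / 2 * c < Derive L c).
        { apply (Rmult_lt_compat_r c) in H1; [|lra]. field_simplify in H1; lra. }
        lra. }
    assert (0 <= (Derive L c - k * c / 2) * (t - 0)) by (apply Rmult_le_pos; lra).
    replace (0^2) with 0 in e by ring. lra.
Qed.

Definition psi r := 9 * (r^2 + 0^2) * exp (- (r^2 + 0^2)) ^ 2.

Lemma psi_cont r : continuity_pt psi r.
Proof. apply (is_derive_cont _ _ _ (Derive_correct psi r ltac:(unfold psi; auto_derive; auto))). Qed.

Lemma find_r q : 0 <= q <= 9 / (2 * exp 1) -> exists r, 0 <= r /\ qG (r, 0) = q.
Proof.
  intros hq.
  assert (p0 : psi 0 = 0) by (unfold psi; ring).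
  assert (p1 : psi (sqrt (1/2)) = 9 / (2 * exp 1)).
  { unfold psi. rewrite exp_half, pow2_sqrt by lra. pose proof (exp_pos 1). field. lra. }
  destruct (IVT_gen psi 0 (sqrt (1/2)) q) as [r [hr er]].
  - intros x. apply psi_cont.
  - rewrite p0, p1. pose proof (exp_pos 1).
    assert (0 <= 9 / (2 * exp 1)) by (apply Rdiv_le_0_compat; lra).
    rewrite Rmin_left, Rmax_right by lra. lra.
  - exists r. pose proof (sqrt_pos (1/2)). rewrite Rmin_left in hr by lra. split; [lra|].
    rewrite qG_eq. exact er.
Qed.

Lemma onlyif_degen gbar eta Ft : 0 < gbar -> 1/3 < eta <= 1 ->
  sqrt (2 * exp 1 + 9) / (6 * eta) <= gbar ->
  is_slippery_cross_slope gbar eta Ft ->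
  (forall p : R * R, strongly_convex_indicatrix (Ft p)) -> False.
Proof.
  intros hg he hd hs hc.
  pose proof (exp_pos 1) as e1.
  set (s := sqrt (2 * exp 1 + 9)) in *.
  assert (ss : s * s = 2 * exp 1 + 9) by (apply sqrt_sqrt; lra).
  assert (sp : 0 < s) by (apply sqrt_lt_R0; lra).
  assert (hg' : s <= 6 * eta * gbar).
  { apply (Rmult_le_compat_r (6 * eta)) in hd; [|lra]. field_simplify in hd; lra. }
  assert (B36 : 2 * exp 1 + 9 <= 36 * eta^2 * gbar^2) by (rewrite <- ss; simpl; nra).
  set (B := 4 * eta^2 * gbar^2 - 1).
  assert (Bp : 0 < B) by (unfold B; lra).
  destruct (find_r (1 / B)) as [r [r0 hr]].
  { split; [apply Rlt_le, Rdiv_lt_0_compat; lra|].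
    apply (Rmult_le_reg_r (B * (2 * exp 1))); [nra|]. field_simplify; [|lra|lra]. unfold B. lra. }
  set (p := (r, 0)) in *.
  set (f := frame_of gbar eta p).
  assert (a2 : fa2 f = 0) by (unfold f, frame_of; cbn [fa2]; rewrite fy_eq; unfold p; cbn [snd]; ring).
  assert (g2 : fg2 f = 0).
  { unfold f, frame_of; cbn [fg2]. unfold Gwind. cbn [snd]. change (fy p) with (fa2 f). rewrite a2. ring. }
  assert (GGe : GG f = 1 / (4 * eta^2)).
  { unfold f. rewrite GG_eq, hr by lra. unfold B. field. split; [lra|]. unfold B in Bp. lra. }
  assert (g0 : good0 f).
  { split; [unfold f, frame_of; cbn [fe]; lra|]. rewrite GGe. unfold f, frame_of; cbn [fe]. right. field. lra. }
  set (g1 := fg1 f).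
  set (a1 := fa1 f).
  assert (GGe' : GG f = (1 + a1^2) * g1^2).
  { unfold GG, hh. fold g1 a1. rewrite a2, g2. ring. }
  assert (g1nz : g1 <> 0).
  { intros e. rewrite GGe', e in GGe. assert (0 < 1 / (4 * eta^2)) by (apply Rdiv_lt_0_compat; nra). 
    rewrite <- GGe in H. lra. }
  assert (FE : forall w t, Fcs gbar eta p (shiftw gbar p w t) = Fn f (fst w - t * g1) (snd w - t * fg2 f)).
  { intros w t. rewrite Fcs_eq by lra. reflexivity. }
  assert (sym : forall w1 w2, (w1, w2) <> (0,0) -> Ft p (w1, - w2) = Ft p (w1, w2)).
  { intros w1 w2 nz.
    assert (nz' : (w1, - w2) <> (0,0)).
    { intros e. apply nz. injection e as e' e''. rewrite e'. f_equal. lra. }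
    destruct (hs p (w1, -w2)) as [_ H]. destruct (H nz') as [tp [te _]].
    destruct (hs p (w1, w2)) as [_ H']. destruct (H' nz) as [_ [_ tu]].
    apply tu; auto. rewrite FE in te |- *. cbn [fst snd] in te |- *. rewrite g2 in te |- *.
    rewrite <- Fn_flip by auto.
    replace (- (w2 - Ft p (w1, - w2) * 0)) with (- w2 - Ft p (w1, - w2) * 0) by ring. exact te. }
  set (x1 := (1 + eta) * g1).
  assert (x1nz : x1 <> 0) by (unfold x1; apply Rmult_integral_contrapositive_currified; lra).
  assert (xnz : (x1, 0) <> (0,0)) by (intros e; injection e; auto).
  assert (Fx : Ft p (x1, 0) = 1).
  { destruct (hs p (x1, 0)) as [_ H]. destruct (H xnz) as [_ [_ tu]].
    symmetry. apply tu; [lra|]. rewrite FE. cbn [fst snd]. rewrite g2.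
    replace (x1 - 1 * g1) with (eta * g1) by (unfold x1; ring).
    replace (0 - 1 * 0) with 0 by ring.
    unfold Fn, HH, KK, hh. rewrite a2, g2. fold a1 g1.
    replace (eta * g1 * (eta * g1) + 0 * 0 + (a1 * (eta * g1) + 0 * 0) * (a1 * (eta * g1) + 0 * 0))
      with (eta^2 * GG f) by (rewrite GGe'; ring).
    replace (eta * g1 * g1 + 0 * 0 + (a1 * (eta * g1) + 0 * 0) * (a1 * g1 + 0 * 0))
      with (eta * GG f) by (rewrite GGe'; ring).
    rewrite GGe. replace (eta ^ 2 * (1 / (4 * eta ^ 2))) with (/2 * /2) by (field; lra).
    rewrite sqrt_square by lra. replace (fe f) with eta by reflexivity. field. lra. }
  destruct (hc p (x1, 0) xnz Fx) as [a [b [abnz [diff [hl [k [hk hdk]]]]]]].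
  cbn [fst snd] in diff, hl, hdk.
  assert (sym' : forall t, Ft p (x1, - t) = Ft p (x1, t)).
  { intros t. apply sym. intros e. injection e; auto. }
  assert (b0 : b = 0).
  { pose proof (derivable_pt_lim_comp_2d (fun u v => Ft p (u, v)) (fun _ => x1) (fun t => t) 0 a b 0 1 diff
      ltac:(apply derivable_pt_lim_const) ltac:(apply derivable_pt_lim_id)) as D1.
    assert (diff' : differentiable_pt_lim (fun u v => Ft p (u, v)) x1 (- 0) a b) by (rewrite Ropp_0; exact diff).
    pose proof (derivable_pt_lim_comp_2d (fun u v => Ft p (u, v)) (fun _ => x1) (fun t => - t) 0 a b 0 (-1) diff'
      ltac:(apply derivable_pt_lim_const) ltac:(apply derivable_pt_lim_opp; apply derivable_pt_lim_id)) as D2.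
    apply is_derive_Reals in D1. apply is_derive_Reals in D2.
    apply is_derive_unique in D1. apply is_derive_unique in D2.
    cbv beta in D1, D2.
    assert (E : (fun t => Ft p (x1, - t)) = (fun t => Ft p (x1, t))).
    { apply FunctionalExtensionality.functional_extensionality. apply sym'. }
    rewrite E in D2. rewrite D1 in D2. lra. }
  subst b.
  assert (anz : a <> 0) by (intros e; apply abnz; rewrite e; reflexivity).
  assert (UB : forall T, T <> 0 -> T^2 <= 1/25 -> Ft p (x1, T) <= 1 + 64 * (T^2)^2).
  { intros T Tn T2.
    set (d := 64 * (T^2)^2). set (S := 1 + d).
    assert (d0 : 0 <= d) by (unfold d; pose proof (pow2_ge_0 (T^2)); lra).
    assert (S1 : 1 <= S) by (unfold S; lra).
    assert (ynz : (x1, T) <> (0,0)) by (intros e; injection e; auto).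
    assert (unz : forall s0, (x1 - s0 * fg1 f, T - s0 * fg2 f) <> (0,0)).
    { intros s0 e. assert (e2 : T - s0 * fg2 f = 0) by exact (f_equal snd e). rewrite g2 in e2. lra. }
    assert (gS : gt f x1 T S <= 0).
    { unfold gt. apply Rle_minus. apply Fn_le0; auto.
      set (C := 1/2 - d / (2*eta)).
      assert (HHe : HH f (x1 - S * fg1 f) (T - S * fg2 f) = C^2 + T^2).
      { unfold HH, hh. rewrite a2, g2. fold a1 g1.
        replace ((x1 - S * g1) * (x1 - S * g1) + (T - S * 0) * (T - S * 0) +
          (a1 * (x1 - S * g1) + 0 * (T - S * 0)) * (a1 * (x1 - S * g1) + 0 * (T - S * 0)))
          with ((1 + eta - S)^2 * ((1 + a1^2) * g1^2) + T^2) by (unfold x1; ring).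
        rewrite <- GGe', GGe. unfold C, S. field. lra. }
      assert (KKe : fe f * KK f (x1 - S * fg1 f) (T - S * fg2 f) = C / 2).
      { unfold KK, hh. rewrite a2, g2. fold a1 g1. replace (fe f) with eta by reflexivity.
        replace ((x1 - S * g1) * g1 + (T - S * 0) * 0 +
          (a1 * (x1 - S * g1) + 0 * (T - S * 0)) * (a1 * g1 + 0 * 0))
          with ((1 + eta - S) * ((1 + a1^2) * g1^2)) by (unfold x1; ring).
        rewrite <- GGe', GGe. unfold C, S. field. lra. }
      rewrite HHe, KKe.
      pose proof (degen_ineq eta T he T2) as DI. cbv zeta in DI. fold d S C in DI.
      lra. }
    assert (g0p : 0 < gt f x1 T 0) by (rewrite gt0; apply Fn_pos0; auto).
    destruct (IVT_gen (gt f x1 T) 0 S 0) as [s0 [hs0 es0]].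
    - intros z. unfold gt. apply continuity_pt_minus; [|apply continuity_pt_id].
      apply (cont2_to_1 (Fn f) (fun t => x1 - t * fg1 f) (fun t => T - t * fg2 f)).
      + apply Fn_cont0; auto.
      + apply aff_cont.
      + apply aff_cont.
    - rewrite Rmin_right, Rmax_left by lra. lra.
    - rewrite Rmin_left, Rmax_right in hs0 by lra.
      assert (s0p : 0 < s0) by (destruct (Req_dec s0 0) as [->|]; lra).
      destruct (hs p (x1, T)) as [_ H]. destruct (H ynz) as [_ [_ tu]].
      rewrite <- (tu s0 s0p).
      + lra.
      + rewrite FE. cbn [fst snd]. unfold gt in es0. fold g1 in es0. lra. }
  set (L := fun t => Ft p (x1 - t * 0, 0 + t * a)) in *.
  assert (LE : forall t, L t = Ft p (x1, t * a)) by (intros t; unfold L; f_equal; f_equal; ring).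
  assert (L0 : L 0 = 1) by (rewrite LE, Rmult_0_l; exact Fx).
  assert (Lev : forall t, L (- t) = L t).
  { intros t. rewrite !LE. replace (- t * a) with (- (t * a)) by ring. apply sym'. }
  assert (DL0 : Derive L 0 = 0).
  { assert (ex : ex_derive L 0).
    { apply loc_R in hl. destruct hl as [rho hrr]. apply hrr. change (Rabs (0 - 0) < rho). rewrite Rminus_0_r, Rabs_R0. apply cond_pos. }
    destruct ex as [l hlp].
    assert (h2 : is_derive (fun t => L (- t)) 0 (scal (-1) l)).
    { apply (is_derive_comp L (fun t => - t)).
      - rewrite Ropp_0. exact hlp.
      - auto_derive; auto. }
    assert (h3 : is_derive L 0 (scal (-1) l)) by (eapply is_derive_ext; [|exact h2]; intro t; exact (Lev t)).
    pose proof (is_derive_unique _ _ _ hlp) as u1. pose proof (is_derive_unique _ _ _ h3) as u2.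
    rewrite u1 in u2. change (scal (-1) l) with ((-1) * l) in u2. rewrite u1. lra. }
  destruct (growth L k hl DL0 hk hdk) as [t0 [t0p G]].
  rewrite L0 in G.
  assert (ap : 0 < Rabs a) by (apply Rabs_pos_lt; auto).
  assert (a4 : 0 <= a^4) by (replace (a^4) with ((a^2)^2) by ring; apply pow2_ge_0).
  set (t := Rmin (t0/2) (Rmin (1/(5*(Rabs a + 1))) (Rmin 1 (k/(512*(a^4+1)))))).
  assert (q1 : 0 < 1/(5*(Rabs a + 1))) by (apply Rdiv_lt_0_compat; lra).
  assert (q2 : 0 < k/(512*(a^4+1))) by (apply Rdiv_lt_0_compat; lra).
  assert (tp : 0 < t) by (unfold t; repeat apply Rmin_pos; lra).
  assert (tt0 : t < t0) by (unfold t; pose proof (Rmin_l (t0/2) (Rmin (1/(5*(Rabs a + 1))) (Rmin 1 (k/(512*(a^4+1)))))); lra).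
  assert (tb : t <= 1/(5*(Rabs a + 1))) by (unfold t; eapply Rle_trans; [apply Rmin_r|apply Rmin_l]).
  assert (t1 : t <= 1) by (unfold t; eapply Rle_trans; [apply Rmin_r|]; eapply Rle_trans; [apply Rmin_r|apply Rmin_l]).
  assert (tk : t <= k/(512*(a^4+1))) by (unfold t; eapply Rle_trans; [apply Rmin_r|]; eapply Rle_trans; [apply Rmin_r|apply Rmin_r]).
  assert (Ta : Rabs (t * a) <= 1/5).
  { rewrite Rabs_mult, Rabs_pos_eq by lra.
    apply (Rmult_le_compat_r (Rabs a)) in tb; [|lra].
    replace (1 / (5 * (Rabs a + 1)) * Rabs a) with (Rabs a / (5 * (Rabs a + 1))) in tb by (field; lra).
    assert (Rabs a / (5 * (Rabs a + 1)) <= 1/5).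
    { apply (Rmult_le_reg_r (5 * (Rabs a + 1))); [lra|]. field_simplify; lra. }
    lra. }
  assert (T2 : (t*a)^2 <= 1/25).
  { rewrite <- Rsqr_pow2, Rsqr_abs, Rsqr_pow2. pose proof (Rabs_pos (t*a)). nra. }
  assert (Tn : t * a <> 0) by (apply Rmult_integral_contrapositive_currified; lra).
  pose proof (UB (t*a) Tn T2) as U.
  pose proof (G t ltac:(lra)) as Lo. rewrite LE in Lo.
  assert (K1 : k * t^2 / 4 <= 64 * ((t*a)^2)^2) by lra.
  replace (64 * ((t*a)^2)^2) with (64 * a^4 * t^2 * t^2) in K1 by ring.
  assert (K2 : k <= 256 * a^4 * t^2).
  { assert (0 < t^2) by (apply pow_lt; lra). nra. }
  assert (K3 : 256 * a^4 * t^2 <= 256 * a^4 * t).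
  { apply Rmult_le_compat_l; [lra|]. simpl. nra. }
  assert (K4 : 256 * a^4 * t <= 256 * a^4 * (k/(512*(a^4+1)))) by (apply Rmult_le_compat_l; lra).
  assert (K5 : 256 * a^4 * (k/(512*(a^4+1))) <= k / 2).
  { apply (Rmult_le_reg_r (512*(a^4+1))); [lra|]. field_simplify; [|lra]. nra. }
  lra.
Qed.

Theorem lemma5p1 (gbar eta : R) (hg : 0 < gbar) (heta : 0 <= eta <= 1) :
  (exists Ft : R * R -> R * R -> R,
     is_slippery_cross_slope gbar eta Ft /\
     forall p : R * R, strongly_convex_indicatrix (Ft p))
  <-> gbar < delta2 eta.
Proof.
  split.
  - intros [Ft [hs hc]].
    destruct (Rlt_le_dec gbar (delta2 eta)) as [h|h]; auto.
    exfalso. unfold delta2 in h. destruct (Rle_dec eta (1/3)) as [h3|h3].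
    + exact (onlyif_weak gbar eta Ft hg heta h3 h hs).
    + exact (onlyif_degen gbar eta Ft hg ltac:(lra) h hs hc).
  - intros h. apply if_dir; auto.
Qed.
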